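(* Let $\Omega=e^{\frac{\sqrt{-1}}{2\pi}N\log\frac1z}A(z)$ on the punctured disc, with $N$ nilpotent, $N^{n+1}=0$, and $A(z)=A_0+A_1z+\cdots$ an $H$-valued power series with radius of convergence $\delta>0$. Expanding, write $\Omega=\sum_{k,l}A_{k,l}z^k(\log\frac1z)^l=\sum_{k,l}A_{k,l}f_{k,l}$ with $f_{k,l}=z^k(\log\frac1z)^l$ ($k\ge0$, $0\le l\le n$), and set $\deg f_{k,l}=k-\frac{l}{n+1}$. Then this series converges in the $C^\infty$ sense (near $0$). Moreover, for every real $\mu$ and integer $s\ge0$, \[\Big\|\Omega-\sum_{\deg f_{k,l}\le\mu}A_{k,l}f_{k,l}\Big\|_{C^s}\le C\,r^{k_0-s}\Big(\log\frac1r\Big)^{l_0},\qquad r=|z|,\] for $|z|$ sufficiently small, where $(k_0,l_0)$ is the unique pair of nonnegative integers with $l_0\le n$, $k_0-\frac{l_0}{n+1}>\mu$, and $k'-\frac{l'}{n+1}\ge k_0-\frac{l_0}{n+1}$ for all integers $k',l'$ with $k'-\frac{l'}{n+1}>\mu$; and $C$ is a constant depending only on $k_0,l_0,\mu$ and $\Omega$.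
   Context: This arises from a one-parameter family of polarized Calabi–Yau $n$-folds over the punctured disc $\Delta^*$ (coordinate $z$): by Schmid's nilpotent orbit theorem (after a base change) a nonzero holomorphic section $\Omega$ of the Hodge bundle $F^n$, valued in a fixed complex vector space $H$ (the primitive middle cohomology), has the stated form, $N$ being the nilpotent logarithm of the monodromy. $C^s$ norms are taken with respect to $z$ on a small punctured disc. *)

(* Defs.v *)
(* H = C^m, vectors as nat-indexed families
   (only the components i < m are meaningful). *)
From Stdlib Require Import Reals ZArith.
From Coquelicot Require Import Coquelicot.

Local Open Scope R_scope.

Definition Vec := nat -> Complex.C.
Definition Mat := nat -> nat -> Complex.C.

Fixpoint csum (n : nat) (f : nat -> Complex.C) : Complex.C :=
  match n with
  | O => RtoC 0
  | S n' => Cplus (csum n' f) (f n')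
  end.

Definition matmul (m : nat) (M P : Mat) : Mat :=
  fun i j => csum m (fun k => Cmult (M i k) (P k j)).

Definition matvec (m : nat) (M : Mat) (v : Vec) : Vec :=
  fun i => csum m (fun k => Cmult (M i k) (v k)).

Definition idmat : Mat := fun i j => if Nat.eqb i j then RtoC 1 else RtoC 0.

Fixpoint matpow (m : nat) (M : Mat) (l : nat) : Mat :=
  match l with
  | O => idmat
  | S l' => matmul m M (matpow m M l')
  end.

Fixpoint rsum (n : nat) (f : nat -> R) : R :=
  match n with O => 0 | S n' => rsum n' f + f n' end.

Definition vnorm (m : nat) (v : Vec) : R := rsum m (fun i => Cmod (v i)).

(* the slit punctured disc {0 < |z| < rho} minus the negative real axis,
   on which the principal branch of log is used *)
Definition slitdisc (rho : R) (z : Complex.C) : Prop :=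
  0 < Cmod z < rho /\ ~ (Im z = 0 /\ Re z <= 0).

(* principal logarithm: ln|z| + i Arg z, valid on C minus (-oo,0] *)
Definition Clog (z : Complex.C) : Complex.C :=
  (ln (Cmod z), 2 * atan (Im z / (Cmod z + Re z))).

Definition log1z (z : Complex.C) : Complex.C := Clog (Cinv z).

Definition cst : Complex.C := Cdiv Ci (RtoC (2 * PI)).

(* Omega(z) = exp( (sqrt(-1)/(2pi)) N log(1/z) ) A(z); since N^(n+1) = 0 the
   exponential series is the finite sum over l = 0..n *)
Definition Omega (m n : nat) (N : Mat) (Aval : Complex.C -> Vec)
  (z : Complex.C) : Vec :=
  fun i => csum (S n) (fun l =>
    Cmult (Cdiv (Cpow (Cmult cst (log1z z)) l) (RtoC (INR (fact l))))
          (matvec m (matpow m N l) (Aval z) i)).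

Definition fkl (k l : nat) (z : Complex.C) : Complex.C :=
  Cmult (Cpow z k) (Cpow (log1z z) l).

Definition Akl (m : nat) (N : Mat) (A : nat -> Vec) (k l : nat) : Vec :=
  fun i => Cmult (Cdiv (Cpow cst l) (RtoC (INR (fact l))))
                 (matvec m (matpow m N l) (A k) i).

Definition deg (n : nat) (k l : Z) : R := IZR k - IZR l / INR (S n).

Definition psum (m n : nat) (N : Mat) (A : nat -> Vec) (K : nat)
  (z : Complex.C) : Vec :=
  fun i => csum K (fun k => csum (S n) (fun l =>
    Cmult (Akl m N A k l i) (fkl k l z))).

(* truncated sum over all (k,l), k >= 0, 0 <= l <= n, with deg <= mu.
   Every such k satisfies k <= up mu, so summing k = 0 .. Z.to_nat (up mu)
   with the filter deg <= mu gives exactly the finite sum. *)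
Definition trunc (m n : nat) (N : Mat) (A : nat -> Vec) (mu : R)
  (z : Complex.C) : Vec :=
  fun i => csum (S (Z.to_nat (up mu))) (fun k => csum (S n) (fun l =>
    if Rle_dec (deg n (Z.of_nat k) (Z.of_nat l)) mu
    then Cmult (Akl m N A k l i) (fkl k l z) else RtoC 0)).

Definition derivs_on (m : nat) (U : Complex.C -> Prop) (F : nat -> Complex.C -> Vec)
  : Prop :=
  forall (j i : nat) (z : Complex.C), U z -> (i < m)%nat ->
    @is_derive C_AbsRing C_NormedModule (fun w => F j w i) z (F (S j) z i).

Definition Csnorm (m : nat) (F : nat -> Complex.C -> Vec) (s : nat)
  (z : Complex.C) : R :=
  rsum (S s) (fun j => vnorm m (F j z)).

Definition vsub (u v : Vec) : Vec := fun i => Cminus (u i) (v i).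

(* Main.v *)
Require Import Defs.
From Stdlib Require Import Reals ZArith.
From Coquelicot Require Import Coquelicot.
From Stdlib Require Import Lra Lia List ClassicalEpsilon.

Section Dev.
Import ListNotations.
Local Open Scope R_scope.

Definition RR := prod_NormedModule R_AbsRing R_NormedModule R_NormedModule.

Lemma fd_Q (z : R*R) :
  @filterdiff R_AbsRing RR R_NormedModule (fun p : R*R => fst p * fst p + snd p * snd p) (locally z)
    (fun h => 2 * (fst h * fst z + snd h * snd z)).
Proof.
  assert (Hf : @filterdiff R_AbsRing RR R_NormedModule (fun p : R*R => fst p) (locally z) (fun p => fst p)).
  { apply filterdiff_linear. apply is_linear_fst. }
  assert (Hs : @filterdiff R_AbsRing RR R_NormedModule (fun p : R*R => snd p) (locally z) (fun p => snd p)).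
  { apply filterdiff_linear. apply is_linear_snd. }
  pose proof (filterdiff_mult_fct _ _ z _ _ Rmult_comm Hf Hf) as H1.
  pose proof (filterdiff_mult_fct _ _ z _ _ Rmult_comm Hs Hs) as H2.
  pose proof (filterdiff_plus_fct _ _ _ _ H1 H2) as H3.
  eapply filterdiff_ext_lin. exact H3.
  intros h. simpl. unfold plus, mult; simpl. ring.
Qed.

Lemma Cmod_Q (p : R*R) : Cmod p = sqrt (fst p * fst p + snd p * snd p).
Proof. unfold Cmod. f_equal. ring. Qed.

Lemma Q_pos (z : R*R) : z <> (0,0) -> 0 < fst z * fst z + snd z * snd z.
Proof.
  destruct z as [x y]; simpl; intros H.
  destruct (Req_dec x 0); destruct (Req_dec y 0); subst; try (exfalso; now apply H).
  all: nra.
Qed.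

Lemma fd_Cmod (z : R*R) : z <> (0,0) ->
  @filterdiff R_AbsRing RR R_NormedModule (fun p : R*R => Cmod p) (locally z)
    (fun h => (fst h * fst z + snd h * snd z) / Cmod z).
Proof.
  intros Hz. pose proof (Q_pos z Hz) as HQ.
  pose proof (filterdiff_comp' _ _ z _ _ (fd_Q z) (filterdiff_sqrt _ HQ)) as H.
  eapply filterdiff_ext_lin.
  eapply filterdiff_ext. 2: exact H. intros p. simpl. symmetry; apply Cmod_Q.
  intros h. simpl. rewrite Cmod_Q. unfold scal; simpl. unfold mult; simpl.
  assert (0 < sqrt (fst z * fst z + snd z * snd z)) by (apply sqrt_lt_R0; lra).
  field. lra.
Qed.

Lemma Cmod_pos' (z : R*R) : z <> (0,0) -> 0 < Cmod z.
Proof. intros; rewrite Cmod_Q; apply sqrt_lt_R0; apply Q_pos; auto. Qed.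

Lemma fd_lnCmod (z : R*R) : z <> (0,0) ->
  @filterdiff R_AbsRing RR R_NormedModule (fun p : R*R => ln (Cmod p)) (locally z)
    (fun h => (fst h * fst z + snd h * snd z) / (fst z * fst z + snd z * snd z)).
Proof.
  intros Hz. pose proof (Cmod_pos' z Hz) as Hc.
  pose proof (filterdiff_comp' _ _ z _ _ (fd_Cmod z Hz) (is_derive_ln _ Hc)) as H.
  eapply filterdiff_ext_lin. exact H.
  intros h. simpl. unfold scal; simpl. unfold mult; simpl.
  assert (Cmod z * Cmod z = fst z * fst z + snd z * snd z).
  { rewrite Cmod_Q. apply sqrt_sqrt. pose proof (Q_pos z Hz). lra. }
  rewrite <- H0. field. lra.
Qed.

Lemma fd_arg (z : R*R) : z <> (0,0) -> 0 < Cmod z + fst z ->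
  @filterdiff R_AbsRing RR R_NormedModule
    (fun p : R*R => 2 * atan (snd p / (Cmod p + fst p))) (locally z)
    (fun h => (fst z * snd h - snd z * fst h) / (fst z * fst z + snd z * snd z)).
Proof.
  intros Hz HD. pose proof (Cmod_pos' z Hz) as Hc.
  assert (Hf : @filterdiff R_AbsRing RR R_NormedModule (fun p : R*R => fst p) (locally z) (fun p => fst p)).
  { apply filterdiff_linear. apply is_linear_fst. }
  assert (Hs : @filterdiff R_AbsRing RR R_NormedModule (fun p : R*R => snd p) (locally z) (fun p => snd p)).
  { apply filterdiff_linear. apply is_linear_snd. }
  pose proof (filterdiff_plus_fct _ _ _ _ (fd_Cmod z Hz) Hf) as HDf.
  assert (Hinv : is_derive (fun y : R => / y) (Cmod z + fst z) (- 1 / (Cmod z + fst z) ^ 2)).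
  { apply (is_derive_inv (fun y => y)). apply (is_derive_id (K:=R_AbsRing)). lra. }
  pose proof (filterdiff_comp' _ _ z _ _ HDf Hinv) as HI.
  pose proof (filterdiff_mult_fct _ _ z _ _ Rmult_comm Hs HI) as HT.
  assert (Hat : is_derive (fun x : R => 2 * atan x) (snd z * / (Cmod z + fst z))
                  (2 * / (1 + (snd z * / (Cmod z + fst z))²))).
  { apply is_derive_scal. apply is_derive_atan. }
  pose proof (filterdiff_comp' _ _ z _ _ HT Hat) as H.
  eapply filterdiff_ext_lin. exact H.
  intros h. simpl. unfold scal, plus, mult; simpl. unfold mult; simpl.
  assert (HC2 : Cmod z * Cmod z = fst z * fst z + snd z * snd z).
  { rewrite Cmod_Q. apply sqrt_sqrt. pose proof (Q_pos z Hz). lra. }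
  pose proof (Q_pos z Hz) as HQ.
  destruct z as [x y]; simpl in *. set (s := Cmod (x,y)) in *. unfold Rsqr.
  assert (Hden : (s + x) * (s + x) + y * y = 2 * s * (s + x)) by nra.
  assert (Hs0 : 0 < s) by (unfold s; exact Hc).
  replace (1 + y * / (s + x) * (y * / (s + x))) with (2 * s / (s + x)).
  2: { replace (1 + y * / (s + x) * (y * / (s + x))) with (((s + x) * (s + x) + y * y) / ((s+x)*(s+x))) by (field; lra).
       rewrite Hden. field. lra. }
  rewrite <- HC2. destruct h as [h1 h2]; simpl.
  field_simplify; try (split; lra); try lra.
  assert (Hy2 : y ^ 2 = s ^ 2 - x ^ 2) by (simpl; nra). rewrite Hy2.
  field. split. lra. replace (s^3 + s^2*x) with (s*s*(s+x)) by ring. apply Rgt_not_eq. apply Rmult_lt_0_compat; [apply Rmult_lt_0_compat|]; lra.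
Qed.

Lemma fd_eps_dummy : True. Proof. exact I. Qed.
Lemma fd_eps (g : R*R -> R) (l : R*R -> R) (z : R*R) :
  @filterdiff R_AbsRing RR R_NormedModule g (locally z) l ->
  forall eps, 0 < eps -> exists d, 0 < d /\ forall w : R*R,
    Cmod (Cminus w z) < d -> Rabs (g w - g z - l (Cminus w z)) <= eps * Cmod (Cminus w z).
Proof.
  intros [Hl H] eps Heps.
  specialize (H z (fun P HP => HP) (mkposreal eps Heps)).
  destruct H as [[d Hd] Hb].
  exists d. split. exact Hd. intros w Hw.
  assert (Hball : ball z d w).
  { split; simpl; unfold AbsRing_ball, abs, minus, plus, opp; simpl.
    - eapply Rle_lt_trans. 2: exact Hw. pose proof (Rmax_Cmod (Cminus w z)) as HH.
      simpl in HH. eapply Rle_trans. 2: exact HH. apply Rmax_l.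
    - eapply Rle_lt_trans. 2: exact Hw. pose proof (Rmax_Cmod (Cminus w z)) as HH.
      simpl in HH. eapply Rle_trans. 2: exact HH. apply Rmax_r. }
  specialize (Hb w Hball). simpl in Hb.
  unfold norm, minus, plus, opp in Hb; simpl in Hb.
  unfold prod_norm in Hb. simpl in Hb. unfold abs in Hb; simpl in Hb.
  unfold plus, opp in Hb; simpl in Hb.
  unfold Cmod. unfold Cminus, Cplus, Copp. simpl.
  assert (Hsq : forall a : R, norm a * (norm a * 1) = a * (a * 1)).
  { intros a. change (norm a) with (Rabs a). rewrite !Rmult_1_r. rewrite <- Rabs_mult. apply Rabs_pos_eq. nra. }
  rewrite !Hsq in Hb. unfold prod_plus, prod_opp in Hb. simpl in Hb. exact Hb.
Qed.

Lemma is_derive_C_intro (f : C -> C) (z df : C) :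
  (forall eps, 0 < eps -> exists d, 0 < d /\ forall w, Cmod (w - z) < d ->
     Cmod (f w - f z - (w - z) * df) <= eps * Cmod (w - z)) ->
  @is_derive C_AbsRing C_NormedModule f z df.
Proof.
  intros H. split. apply is_linear_scal_l.
  intros x Hx. apply (@is_filter_lim_locally_unique C_AbsRing (AbsRing_NormedModule C_AbsRing)) in Hx. subst x.
  intros eps.
  destruct (H eps (cond_pos eps)) as [d [Hd Hw]].
  exists (mkposreal d Hd). intros w Hb.
  apply Hw. exact Hb.
Qed.

Lemma is_derive_C_intro' (f : C -> C) (z df : C) :
  (forall eps, 0 < eps -> exists d, 0 < d /\ forall w, Cmod (w - z) < d ->
     Cmod (f w - f z - (w - z) * df) <= eps * Cmod (w - z)) ->
  @is_derive C_AbsRing (AbsRing_NormedModule C_AbsRing) f z df.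
Proof.
  intros H. split. apply is_linear_scal_l.
  intros x Hx. apply (@is_filter_lim_locally_unique C_AbsRing (AbsRing_NormedModule C_AbsRing)) in Hx. subst x.
  intros eps.
  destruct (H eps (cond_pos eps)) as [d [Hd Hw]].
  exists (mkposreal d Hd). intros w Hb.
  apply Hw. exact Hb.
Qed.

Lemma Cmod_le_sum (a b : R) : Cmod (a, b) <= Rabs a + Rabs b.
Proof.
  replace (a,b) with (Cplus (RtoC a) (Cmult (RtoC b) Ci)).
  2: { unfold Cplus, Cmult, RtoC, Ci; simpl. f_equal; ring. }
  eapply Rle_trans. apply Cmod_triangle. rewrite Cmod_mult, Cmod_R, Cmod_R.
  replace (Cmod Ci) with 1. lra.
  unfold Cmod, Ci; simpl. replace (0 * (0 * 1) + 1 * (1 * 1)) with 1 by ring. now rewrite sqrt_1.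
Qed.

Definition Clog' (z : C) : C := (ln (Cmod z), 2 * atan (Im z / (Cmod z + Re z))).

Lemma is_derive_Clog' (z : C) : z <> RtoC 0 -> 0 < Cmod z + Re z ->
  @is_derive C_AbsRing C_NormedModule Clog' z (Cinv z).
Proof.
  intros Hz HD.
  assert (Hz' : z <> (0,0)) by exact Hz.
  apply is_derive_C_intro. intros eps Heps.
  destruct (fd_eps _ _ z (fd_lnCmod z Hz') (eps/2) ltac:(lra)) as [d1 [Hd1 H1]].
  destruct (fd_eps _ _ z (fd_arg z Hz' HD) (eps/2) ltac:(lra)) as [d2 [Hd2 H2]].
  exists (Rmin d1 d2). split. apply Rmin_glb_lt; auto.
  intros w Hw.
  specialize (H1 w ltac:(eapply Rlt_le_trans; [exact Hw| apply Rmin_l])).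
  specialize (H2 w ltac:(eapply Rlt_le_trans; [exact Hw| apply Rmin_r])).
  pose proof (Q_pos z Hz') as HQ.
  destruct z as [x y]; destruct w as [a b]; simpl in *.
  unfold Clog', Cminus, Cplus, Copp, Cmult, Cinv, Re, Im in *; simpl in *.
  eapply Rle_trans. apply Cmod_le_sum.
  match goal with |- Rabs ?A + Rabs ?B <= _ => 
    replace A with (ln (Cmod (a, b)) - ln (Cmod (x, y)) -
       ((a + - x) * x + (b + - y) * y) / (x * x + y * y)) by (field; lra);
    replace B with (2 * atan (b / (Cmod (a, b) + a)) - 2 * atan (y / (Cmod (x, y) + x)) -
       (x * (b + - y) - y * (a + - x)) / (x * x + y * y)) by (field; lra) end.
  lra.
Qed.

Lemma Cmod_sub_ge (w z : C) : Cmod z - Cmod (w - z) <= Cmod w.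
Proof.
  replace z with (w + - (w - z))%C at 1 by ring.
  pose proof (Cmod_triangle w (- (w - z))%C). rewrite Cmod_opp in H. lra.
Qed.

Lemma is_derive_Cinv (z : C) : z <> RtoC 0 ->
  @is_derive C_AbsRing (AbsRing_NormedModule C_AbsRing) Cinv z (- (/ z * / z))%C.
Proof.
  intros Hz. apply is_derive_C_intro'. intros eps Heps.
  pose proof (proj1 (Cmod_gt_0 z) Hz) as Hm.
  set (r := Cmod z) in *.
  exists (Rmin (r/2) (eps * (r*r*r) / 2)). split.
  { apply Rmin_glb_lt. lra. apply Rmult_lt_0_compat; [|lra]. apply Rmult_lt_0_compat; auto. apply Rmult_lt_0_compat; auto. apply Rmult_lt_0_compat; auto. }
  intros w Hw.
  assert (Hw1 : Cmod (w - z) < r/2) by (eapply Rlt_le_trans; [exact Hw|apply Rmin_l]).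
  assert (Hw2 : Cmod (w - z) < eps * (r*r*r)/2) by (eapply Rlt_le_trans; [exact Hw|apply Rmin_r]).
  pose proof (Cmod_sub_ge w z) as Hge. fold r in Hge.
  assert (Hwm : r / 2 <= Cmod w) by lra.
  assert (Hw0 : w <> RtoC 0). { intros E. rewrite E, Cmod_0 in Hwm. lra. }
  replace (/ w - / z - (w - z) * - (/ z * / z))%C with ((w - z) * (w - z) * / (w * z * z))%C
    by (field; split; auto).
  rewrite !Cmod_mult, Cmod_inv, !Cmod_mult.
  2: { repeat apply Cmult_neq_0; auto. }
  fold r. set (h := Cmod (w - z)) in *.
  assert (0 <= h) by apply Cmod_ge_0.
  apply Rmult_le_reg_r with (Cmod w * r * r). 
  { apply Rmult_lt_0_compat; [|lra]. apply Rmult_lt_0_compat; lra. }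
  rewrite Rmult_assoc, Rinv_l. 2: { apply Rgt_not_eq. apply Rmult_lt_0_compat; [|lra]. apply Rmult_lt_0_compat; lra. }
  rewrite Rmult_1_r.
  assert (h * h <= h * (eps * (r*r*r)/2)) by (apply Rmult_le_compat_l; lra).
  assert (eps * h * (r/2 * r * r) <= eps * h * (Cmod w * r * r)).
  { apply Rmult_le_compat_l. apply Rmult_le_pos; lra. apply Rmult_le_compat_r; [lra|]. apply Rmult_le_compat_r; lra. }
  nra.
Qed.

Lemma slit_nz (z : C) : ~ (Im z = 0 /\ Re z <= 0) -> z <> RtoC 0.
Proof. intros H E. apply H. subst. simpl. split; lra. Qed.

Lemma slit_pos (z : C) : ~ (Im z = 0 /\ Re z <= 0) -> 0 < Cmod z + Re z.
Proof.
  intros H. destruct z as [x y]; simpl in *. unfold Cmod; simpl.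
  destruct (Req_dec y 0) as [Hy|Hy].
  - subst. assert (x > 0) by (destruct (Rle_dec x 0); [exfalso; apply H; auto| lra]).
    pose proof (sqrt_pos (x * (x * 1) + 0 * (0 * 1))). lra.
  - assert (Rabs x < sqrt (x * (x * 1) + y * (y * 1))).
    { rewrite !Rmult_1_r. rewrite <- sqrt_Rsqr_abs. unfold Rsqr. apply sqrt_lt_1_alt.
      assert (0 < y * y) by (apply Rsqr_pos_lt; auto). unfold Rsqr in *. nra. }
    pose proof (Rabs_maj2 x). lra.
Qed.

Lemma slit_inv (z : C) : ~ (Im z = 0 /\ Re z <= 0) -> ~ (Im (/ z) = 0 /\ Re (/ z) <= 0).
Proof.
  intros H. pose proof (slit_nz z H) as Hz.
  destruct z as [x y]. unfold Cinv; simpl in *. intros [H1 H2]. apply H.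
  assert (HQ : 0 < x * x + y * y) by (apply (Q_pos (x,y)); exact Hz).
  replace (x * (x * 1) + y * (y * 1)) with (x*x+y*y) in * by ring.
  assert (y = 0).
  { apply Rmult_eq_reg_r with (/ (x*x+y*y)). 2: apply Rgt_not_eq, Rinv_0_lt_compat; lra.
    unfold Rdiv in H1. lra. }
  split; auto. unfold Rdiv in H2.
  assert (0 < / (x*x+y*y)) by (apply Rinv_0_lt_compat; lra). nra.
Qed.

Lemma is_derive_log1z (z : C) : ~ (Im z = 0 /\ Re z <= 0) ->
  @is_derive C_AbsRing C_NormedModule log1z z (- / z)%C.
Proof.
  intros H. pose proof (slit_nz z H) as Hz.
  pose proof (slit_inv z H) as Hi.
  pose proof (is_derive_Clog' (/ z) (slit_nz _ Hi) (slit_pos _ Hi)) as H1.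
  pose proof (is_derive_Cinv z Hz) as H2.
  pose proof (is_derive_comp Clog' Cinv z _ _ H1 H2) as H3.
  replace (- / z)%C with (scal (- (/ z * / z))%C (/ / z)%C).
  exact H3.
  unfold scal; simpl. unfold mult; simpl. field. auto.
Qed.

Lemma csum_ext n f g : (forall k, (k < n)%nat -> f k = g k) -> csum n f = csum n g.
Proof. induction n; simpl; intros H; auto. rewrite IHn by (intros; apply H; lia). rewrite H by lia. auto. Qed.

Lemma csum_plus n f g : csum n (fun k => Cplus (f k) (g k)) = Cplus (csum n f) (csum n g).
Proof. induction n; simpl. ring. rewrite IHn. ring. Qed.

Lemma csum_minus n f g : csum n (fun k => Cminus (f k) (g k)) = Cminus (csum n f) (csum n g).
Proof. induction n; simpl. ring. rewrite IHn. ring. Qed.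

Lemma csum_scal n c f : csum n (fun k => Cmult c (f k)) = Cmult c (csum n f).
Proof. induction n; simpl. ring. rewrite IHn. ring. Qed.

Lemma csum_zero n : csum n (fun _ => RtoC 0) = RtoC 0.
Proof. induction n; simpl; auto. rewrite IHn. ring. Qed.

Lemma csum_swap n m (f : nat -> nat -> C) :
  csum n (fun i => csum m (fun j => f i j)) = csum m (fun j => csum n (fun i => f i j)).
Proof.
  induction n; simpl. rewrite csum_zero. auto.
  rewrite IHn. rewrite <- csum_plus. auto.
Qed.

Lemma rsum_ext n f g : (forall k, (k < n)%nat -> f k = g k) -> rsum n f = rsum n g.
Proof. induction n; simpl; intros H; auto. rewrite IHn by (intros; apply H; lia). rewrite H by lia. auto. Qed.

Lemma rsum_le n f g : (forall k, (k < n)%nat -> f k <= g k) -> rsum n f <= rsum n g.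
Proof. induction n; simpl; intros H. lra. apply Rplus_le_compat. apply IHn; intros; apply H; lia. apply H; lia. Qed.

Lemma rsum_plus n f g : rsum n (fun k => f k + g k) = rsum n f + rsum n g.
Proof. induction n; simpl. ring. rewrite IHn. ring. Qed.

Lemma rsum_scal n c f : rsum n (fun k => c * f k) = c * rsum n f.
Proof. induction n; simpl. ring. rewrite IHn. ring. Qed.

Lemma rsum_nonneg n f : (forall k, (k < n)%nat -> 0 <= f k) -> 0 <= rsum n f.
Proof. induction n; simpl; intros H. lra. pose proof (H n ltac:(lia)). pose proof (IHn ltac:(intros; apply H; lia)). lra. Qed.

Lemma Cmod_csum n f : Cmod (csum n f) <= rsum n (fun k => Cmod (f k)).
Proof.
  induction n; simpl. rewrite Cmod_0. lra.
  eapply Rle_trans. apply Cmod_triangle. lra.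
Qed.

Lemma rsum_swap n m (f : nat -> nat -> R) :
  rsum n (fun i => rsum m (fun j => f i j)) = rsum m (fun j => rsum n (fun i => f i j)).
Proof.
  induction n; simpl.
  - induction m; simpl; lra.
  - rewrite IHn. rewrite <- rsum_plus. auto.
Qed.

Definition CD (f : C -> C) (z l : C) := @is_derive C_AbsRing C_NormedModule f z l.

Lemma CD_of (f : C -> C) z l : @is_derive C_AbsRing (AbsRing_NormedModule C_AbsRing) f z l -> CD f z l.
Proof. intros [_ H]. split. apply is_linear_scal_l. intros x Hx eps. exact (H x Hx eps). Qed.
Lemma CD_to (f : C -> C) z l : CD f z l -> @is_derive C_AbsRing (AbsRing_NormedModule C_AbsRing) f z l.
Proof. intros [_ H]. split. apply is_linear_scal_l. intros x Hx eps. exact (H x Hx eps). Qed.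

Lemma CD_ext_val f z l l' : l = l' -> CD f z l -> CD f z l'.
Proof. intros ->; auto. Qed.

Lemma CD_ext f g z l : (forall w, f w = g w) -> CD f z l -> CD g z l.
Proof. intros H. apply is_derive_ext. auto. Qed.

Lemma CD_const c z : CD (fun _ => c) z (RtoC 0).
Proof. apply (is_derive_const (K:=C_AbsRing) (V:=C_NormedModule)). Qed.

Lemma CD_id z : CD (fun w => w) z (RtoC 1).
Proof. apply CD_of. apply (is_derive_id (K:=C_AbsRing)). Qed.

Lemma CD_plus f g z a b : CD f z a -> CD g z b -> CD (fun w => Cplus (f w) (g w)) z (Cplus a b).
Proof. intros H1 H2. apply (is_derive_plus (K:=C_AbsRing) (V:=C_NormedModule) f g z a b H1 H2). Qed.

Lemma CD_opp f z a : CD f z a -> CD (fun w => Copp (f w)) z (Copp a).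
Proof. intros H1. apply (is_derive_opp (K:=C_AbsRing) (V:=C_NormedModule) f z a H1). Qed.

Lemma CD_minus f g z a b : CD f z a -> CD g z b -> CD (fun w => Cminus (f w) (g w)) z (Cminus a b).
Proof. intros H1 H2. apply CD_plus; auto. apply CD_opp; auto. Qed.

Lemma CD_mult f g z a b : CD f z a -> CD g z b ->
  CD (fun w => Cmult (f w) (g w)) z (Cplus (Cmult a (g z)) (Cmult (f z) b)).
Proof.
  intros H1 H2. apply CD_of.
  apply (is_derive_mult (K:=C_AbsRing) f g z a b (CD_to _ _ _ H1) (CD_to _ _ _ H2)).
  intros; apply Cmult_comm.
Qed.

Lemma CD_scal c f z a : CD f z a -> CD (fun w => Cmult c (f w)) z (Cmult c a).
Proof.
  intros H. eapply CD_ext_val. 2: { apply CD_mult; [apply CD_const|exact H]. } simpl. ring.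
Qed.

Lemma CD_csum n (F : nat -> C -> C) (dF : nat -> C) z :
  (forall k, (k < n)%nat -> CD (F k) z (dF k)) -> CD (fun w => csum n (fun k => F k w)) z (csum n dF).
Proof.
  induction n; simpl; intros H. apply CD_const.
  apply CD_plus. apply IHn; intros; apply H; lia. apply H; lia.
Qed.

Lemma CD_pow_inv n z : z <> RtoC 0 ->
  CD (fun w => Cpow (Cinv w) (S n)) z (Cmult (RtoC (- INR (S n))) (Cpow (Cinv z) (S (S n)))).
Proof.
  intros Hz. induction n.
  - apply (CD_ext Cinv). { intros w. simpl. ring. }
    eapply CD_ext_val. 2: apply CD_of, is_derive_Cinv, Hz.
    simpl. rewrite RtoC_opp. simpl. replace (RtoC 1) with (RtoC 1) by auto. ring.
  - apply (CD_ext (fun w => Cmult (Cinv w) (Cpow (Cinv w) (S n)))). { intros w. rewrite (Cpow_S _ (S n)). reflexivity. }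
    eapply CD_ext_val. 2: { apply CD_mult. apply CD_of, is_derive_Cinv, Hz. apply IHn. }
    rewrite !Cpow_S. rewrite !S_INR, !RtoC_opp, !RtoC_plus. ring.
Qed.

Fixpoint cL (j : nat) : C :=
  match j with O => RtoC (-1) | S j' => Cmult (cL j') (RtoC (- INR (S j'))) end.

Definition Lfam (j : nat) (z : C) : C :=
  match j with O => log1z z | S j' => Cmult (cL j') (Cpow (Cinv z) (S j')) end.

Definition slit (z : C) := ~ (Im z = 0 /\ Re z <= 0).

Lemma Lfam_D j z : slit z -> CD (Lfam j) z (Lfam (S j) z).
Proof.
  intros Hs. destruct j as [|j].
  - simpl. eapply CD_ext_val. 2: apply is_derive_log1z, Hs. simpl. ring.
  - change (CD (fun w => Cmult (cL j) (Cpow (Cinv w) (S j))) z (Cmult (Cmult (cL j) (RtoC (- INR (S j)))) (Cpow (Cinv z) (S (S j))))).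
    eapply CD_ext_val. 2: { apply CD_scal. apply CD_pow_inv. apply slit_nz; auto. }
    ring.
Qed.

Definition Dfam (U : C -> Prop) (f : nat -> C -> C) :=
  forall j z, U z -> CD (f j) z (f (S j) z).

Fixpoint pl (j : nat) : list (nat * nat) :=
  match j with
  | O => [(O, O)]
  | S j' => flat_map (fun p => [(S (fst p), snd p); (fst p, S (snd p))]) (pl j')
  end.

Definition lsumC (l : list C) : C := fold_right Cplus (RtoC 0) l.

Definition pfam (f g : nat -> C -> C) (j : nat) (z : C) : C :=
  lsumC (map (fun p => Cmult (f (fst p) z) (g (snd p) z)) (pl j)).

Lemma lsumC_app l1 l2 : lsumC (l1 ++ l2) = Cplus (lsumC l1) (lsumC l2).
Proof. induction l1; simpl. ring. rewrite IHl1. ring. Qed.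

Lemma pfam_D_aux (f g : nat -> C -> C) z (ps : list (nat*nat)) :
  (forall a, CD (f a) z (f (S a) z)) -> (forall b, CD (g b) z (g (S b) z)) ->
  CD (fun w => lsumC (map (fun p => Cmult (f (fst p) w) (g (snd p) w)) ps)) z
     (lsumC (map (fun p => Cmult (f (fst p) z) (g (snd p) z))
        (flat_map (fun p => [(S (fst p), snd p); (fst p, S (snd p))]) ps))).
Proof.
  intros Hf Hg. induction ps as [|p ps IH]; simpl.
  - apply CD_const.
  -
    eapply CD_ext_val. 2: { apply CD_plus. apply CD_mult; [apply Hf|apply Hg]. exact IH. }
    ring.
Qed.

Lemma pfam_D U f g : Dfam U f -> Dfam U g -> Dfam U (pfam f g).
Proof.
  intros Hf Hg j z Hz. unfold pfam. simpl pl at 2.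
  apply pfam_D_aux; intros; [apply Hf|apply Hg]; auto.
Qed.

Lemma pfam_0 f g z : pfam f g 0 z = Cmult (f 0%nat z) (g 0%nat z).
Proof. unfold pfam; simpl. ring. Qed.

Lemma pl_sum j p : In p (pl j) -> (fst p + snd p = j)%nat.
Proof.
  revert p; induction j; simpl; intros p H.
  - destruct H as [<-|[]]; auto.
  - apply in_flat_map in H. destruct H as [q [Hq Hp]].
    specialize (IHj q Hq). simpl in Hp.
    destruct Hp as [<-|[<-|[]]]; simpl; lia.
Qed.

Lemma lsumC_bound {A} (h : A -> C) (ps : list A) M :
  (forall p, In p ps -> Cmod (h p) <= M) -> Cmod (lsumC (map h ps)) <= INR (length ps) * M.
Proof.
  induction ps as [|p ps IH]; simpl; intros H.
  - rewrite Cmod_0. lra.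
  - eapply Rle_trans. apply Cmod_triangle.
    pose proof (H p (or_introl eq_refl)). pose proof (IH (fun q Hq => H q (or_intror Hq))).
    destruct (length ps); simpl in *; lra.
Qed.

Lemma Dfam_plus U f g : Dfam U f -> Dfam U g -> Dfam U (fun j z => Cplus (f j z) (g j z)).
Proof. intros Hf Hg j z Hz. apply CD_plus; auto. Qed.

Lemma Dfam_minus U f g : Dfam U f -> Dfam U g -> Dfam U (fun j z => Cminus (f j z) (g j z)).
Proof. intros Hf Hg j z Hz. apply CD_minus; auto. Qed.

Lemma Dfam_scal U c f : Dfam U f -> Dfam U (fun j z => Cmult c (f j z)).
Proof. intros Hf j z Hz. apply CD_scal; auto. Qed.

Lemma Dfam_csum U n (F : nat -> nat -> C -> C) :
  (forall k, (k < n)%nat -> Dfam U (F k)) -> Dfam U (fun j z => csum n (fun k => F k j z)).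
Proof. intros H j z Hz. apply CD_csum. intros k Hk. apply H; auto. Qed.

Definition onef (j : nat) (z : C) : C := match j with O => RtoC 1 | S _ => RtoC 0 end.

Lemma onef_D U : Dfam U onef.
Proof. intros j z _. destruct j; simpl; apply CD_const. Qed.

Fixpoint Lp (l : nat) : nat -> C -> C :=
  match l with O => onef | S l' => pfam Lfam (Lp l') end.

Lemma Lp_D (U : C -> Prop) l : (forall z, U z -> slit z) -> Dfam U (Lp l).
Proof.
  intros HU. induction l; simpl. apply onef_D.
  apply pfam_D; auto. intros j z Hz. apply Lfam_D. auto.
Qed.

Lemma Lp_0 l z : Lp l 0 z = Cpow (log1z z) l.
Proof. induction l; simpl. auto. rewrite pfam_0. rewrite IHl. auto. Qed.

Definition Lam (z : C) : R := ln (1 / Cmod z) + PI.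
Definition W (al : Z) (be : nat) (j : nat) (z : C) : R :=
  powerRZ (Cmod z) (al - Z.of_nat j) * Lam z ^ be.

Definition Udom (U : C -> Prop) := forall z, U z -> 0 < Cmod z < 1.

Definition Bnd (U : C -> Prop) (f : nat -> C -> C) (al : Z) (be : nat) :=
  forall j, exists Cc, 0 <= Cc /\ forall z, U z -> Cmod (f j z) <= Cc * W al be j z.

Lemma ln1r_pos z : 0 < Cmod z < 1 -> 0 < ln (1 / Cmod z).
Proof.
  intros H. rewrite <- ln_1. apply ln_increasing. lra. unfold Rdiv. rewrite Rmult_1_l.
  rewrite <- Rinv_1. apply Rinv_lt_contravar; lra.
Qed.

Lemma Lam_ge1 z : 0 < Cmod z < 1 -> 1 <= Lam z.
Proof. intros H. unfold Lam. pose proof (ln1r_pos z H). pose proof PI2_1. lra. Qed.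

Lemma W_nonneg al be j z : 0 < Cmod z < 1 -> 0 <= W al be j z.
Proof.
  intros H. unfold W. apply Rmult_le_pos. apply powerRZ_le; lra.
  apply pow_le. pose proof (Lam_ge1 z H). lra.
Qed.

Lemma Bnd_upto U f al be : Udom U -> Bnd U f al be -> forall J, exists Cc, 0 <= Cc /\
  forall a z, (a <= J)%nat -> U z -> Cmod (f a z) <= Cc * W al be a z.
Proof.
  intros HU HB J. induction J.
  - destruct (HB 0%nat) as [Cc [HC H]]. exists Cc. split; auto. intros a z Ha Hz.
    replace a with 0%nat by lia. auto.
  - destruct IHJ as [C1 [HC1 H1]]. destruct (HB (S J)) as [C2 [HC2 H2]].
    exists (C1 + C2). split. lra. intros a z Ha Hz.
    pose proof (W_nonneg al be a z (HU z Hz)).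
    destruct (Nat.eq_dec a (S J)) as [->|Hne].
    + specialize (H2 z Hz). nra.
    + specialize (H1 a z ltac:(lia) Hz). nra.
Qed.

Lemma W_mult al be ga de a b z : 0 < Cmod z ->
  W al be a z * W ga de b z = W (al + ga) (be + de) (a + b) z.
Proof.
  intros H. unfold W. rewrite pow_add.
  replace (al + ga - Z.of_nat (a + b))%Z with ((al - Z.of_nat a) + (ga - Z.of_nat b))%Z by lia.
  rewrite powerRZ_add by lra. ring.
Qed.

Lemma pfam_Bnd U f g al be ga de : Udom U -> Bnd U f al be -> Bnd U g ga de ->
  Bnd U (pfam f g) (al + ga) (be + de).
Proof.
  intros HU Hf Hg j.
  destruct (Bnd_upto U f al be HU Hf j) as [Cf [HCf Hf']].
  destruct (Bnd_upto U g ga de HU Hg j) as [Cg [HCg Hg']].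
  exists (INR (length (pl j)) * (Cf * Cg)). split.
  { apply Rmult_le_pos. apply pos_INR. nra. }
  intros z Hz. unfold pfam. rewrite Rmult_assoc.
  apply lsumC_bound. intros p Hp. pose proof (pl_sum j p Hp) as Hs.
  rewrite Cmod_mult.
  specialize (Hf' (fst p) z ltac:(lia) Hz). specialize (Hg' (snd p) z ltac:(lia) Hz).
  pose proof (W_nonneg al be (fst p) z (HU z Hz)).
  pose proof (W_nonneg ga de (snd p) z (HU z Hz)).
  pose proof (Cmod_ge_0 (f (fst p) z)). pose proof (Cmod_ge_0 (g (snd p) z)).
  rewrite <- Hs, <- W_mult by (apply HU; auto).
  replace (Cf * Cg * (W al be (fst p) z * W ga de (snd p) z)) with
    ((Cf * W al be (fst p) z) * (Cg * W ga de (snd p) z)) by ring.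
  apply Rmult_le_compat; auto.
Qed.

Lemma Bnd_plus U f g al be : Bnd U f al be -> Bnd U g al be -> Udom U ->
  Bnd U (fun j z => Cplus (f j z) (g j z)) al be.
Proof.
  intros Hf Hg HU j. destruct (Hf j) as [C1 [H1 H1']]. destruct (Hg j) as [C2 [H2 H2']].
  exists (C1 + C2). split. lra. intros z Hz.
  eapply Rle_trans. apply Cmod_triangle. specialize (H1' z Hz). specialize (H2' z Hz). lra.
Qed.

Lemma Bnd_scal U c f al be : Bnd U f al be -> Bnd U (fun j z => Cmult c (f j z)) al be.
Proof.
  intros Hf j. destruct (Hf j) as [C1 [H1 H1']]. exists (Cmod c * C1). split.
  apply Rmult_le_pos; auto. apply Cmod_ge_0.
  intros z Hz. rewrite Cmod_mult. rewrite Rmult_assoc. apply Rmult_le_compat_l. apply Cmod_ge_0. auto.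
Qed.

Lemma Bnd_zero U al be : Bnd U (fun _ _ => RtoC 0) al be.
Proof. intros j. exists 0. split. lra. intros z _. rewrite Cmod_0. lra. Qed.

Lemma Bnd_csum U n (F : nat -> nat -> C -> C) al be : Udom U ->
  (forall k, (k < n)%nat -> Bnd U (F k) al be) -> Bnd U (fun j z => csum n (fun k => F k j z)) al be.
Proof.
  intros HU H. induction n; simpl.
  - apply Bnd_zero.
  - apply Bnd_plus. apply IHn; intros; apply H; lia. apply H; lia. exact HU.
Qed.

Lemma Bnd_ext U f g al be : (forall j z, U z -> f j z = g j z) -> Bnd U f al be -> Bnd U g al be.
Proof.
  intros E H j. destruct (H j) as [C [HC H']]. exists C. split; auto. intros z Hz. rewrite <- E; auto.
Qed.

Lemma onef_Bnd U : Udom U -> Bnd U onef 0 0.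
Proof.
  intros HU j. exists 1. split. lra. intros z Hz. pose proof (W_nonneg 0 0 j z (HU z Hz)).
  destruct j; simpl.
  - rewrite Cmod_1. unfold W. simpl. lra.
  - rewrite Cmod_0. lra.
Qed.

Lemma Cmod_log1z z : 0 < Cmod z < 1 -> Cmod (log1z z) <= Lam z.
Proof.
  intros H. unfold log1z, Clog, Lam.
  eapply Rle_trans. apply Cmod_le_sum.
  assert (Hz : z <> RtoC 0). { intros E. rewrite E, Cmod_0 in H. lra. }
  rewrite Cmod_inv by auto.
  replace (/ Cmod z) with (1 / Cmod z) by (unfold Rdiv; ring).
  pose proof (ln1r_pos z H). rewrite Rabs_pos_eq by lra.
  pose proof (atan_bound (Im (/ z) / (1 / Cmod z + Re (/ z)))).
  assert (Rabs (2 * atan (Im (/ z) / (1 / Cmod z + Re (/ z)))) <= PI).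
  { apply Rabs_le. lra. }
  lra.
Qed.

Lemma Lfam_Bnd U : Udom U -> Bnd U Lfam 0 1.
Proof.
  intros HU j. destruct j as [|j].
  - exists 1. split. lra. intros z Hz. simpl. unfold W. simpl.
    pose proof (Cmod_log1z z (HU z Hz)). lra.
  - exists (Cmod (cL j)). split. apply Cmod_ge_0. intros z Hz. simpl Lfam.
    pose proof (HU z Hz) as Hr.
    assert (Hz0 : z <> RtoC 0). { intros E. rewrite E, Cmod_0 in Hr. lra. }
    rewrite Cmod_mult. apply Rmult_le_compat_l. apply Cmod_ge_0.
    unfold W. rewrite <- (Cpow_S (/ z) j). rewrite Cmod_pow, Cmod_inv by auto.
    replace (0 - Z.of_nat (S j))%Z with (- Z.of_nat (S j))%Z by lia.
    rewrite powerRZ_neg', <- pow_powerRZ, pow_inv.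
    pose proof (Lam_ge1 z Hr). rewrite pow_1.
    assert (0 < / Cmod z ^ S j). { apply Rinv_0_lt_compat. apply pow_lt. lra. }
    nra.
Qed.

Lemma Lp_Bnd U l : Udom U -> Bnd U (Lp l) 0 l.
Proof.
  intros HU. induction l; simpl. apply onef_Bnd; auto.
  apply (pfam_Bnd U Lfam (Lp l) 0 1 0 l HU (Lfam_Bnd U HU) IHl).
Qed.

Definition Cis_series (a : nat -> C) (l : C) := @is_series C_AbsRing C_NormedModule a l.
Definition Cser (a : nat -> C) : C := epsilon (inhabits (RtoC 0)) (fun l => Cis_series a l).

Lemma Cser_spec a : (exists l, Cis_series a l) -> Cis_series a (Cser a).
Proof. intros H. unfold Cser. apply epsilon_spec. exact H. Qed.

Lemma Cis_unique a l1 l2 : Cis_series a l1 -> Cis_series a l2 -> l1 = l2.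
Proof.
  intros H1 H2. apply (filterlim_locally_unique (V:=C_NormedModule) (sum_n a) l1 l2 H1 H2).
Qed.

Lemma Cser_eq a l : Cis_series a l -> Cser a = l.
Proof. intros H. apply (Cis_unique a). apply Cser_spec. exists l; auto. auto. Qed.

Lemma Cex a : ex_series (fun k => Cmod (a k)) -> exists l, Cis_series a l.
Proof.
  intros H.
  assert (E : @ex_series C_AbsRing C_CompleteNormedModule a).
  { apply (ex_series_le (V:=C_CompleteNormedModule) a (fun k => Cmod (a k))); auto.
    intros n. apply Rle_refl. }
  destruct E as [l Hl]. exists l. exact Hl.
Qed.

Lemma sum_n_Cmod_le (a : nat -> C) (b : nat -> R) n :
  (forall k, Cmod (a k) <= b k) -> Cmod (sum_n a n) <= sum_n b n.
Proof.
  intros H. eapply Rle_trans. exact (norm_sum_n_m (V:=C_NormedModule) a 0 n).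
  apply sum_n_m_le. intros k. apply H.
Qed.

Lemma Cnorm_le a l b L : Cis_series a l -> is_series b L -> (forall k, Cmod (a k) <= b k) -> Cmod l <= L.
Proof.
  intros Ha Hb H.
  assert (H1 : is_lim_seq (fun n => Cmod (sum_n a n)) (Cmod l)).
  { unfold is_lim_seq.
    exact (filterlim_comp _ _ _ (sum_n a) (@norm C_AbsRing C_NormedModule) _ _ _ Ha (filterlim_norm (V:=C_NormedModule) l)). }
  assert (H2 : is_lim_seq (sum_n b) L) by exact Hb.
  pose proof (is_lim_seq_le _ _ _ _ (fun n => sum_n_Cmod_le a b n H) H1 H2). simpl in H0. exact H0.
Qed.

Lemma sum_n_csum (a : nat -> C) n : @sum_n C_AbelianMonoid a n = csum (S n) a.
Proof.
  induction n.
  - rewrite sum_O. simpl. ring.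
  - rewrite sum_Sn. rewrite IHn. reflexivity.
Qed.

Lemma csum_tail_zero (a : nat -> C) K n : (forall k, (K <= k)%nat -> a k = RtoC 0) -> (K <= n)%nat ->
  csum n a = csum K a.
Proof.
  intros H Hn. induction Hn. auto. simpl. rewrite IHHn, H by lia. ring.
Qed.

Lemma Cis_finite (a : nat -> C) K : (forall k, (K <= k)%nat -> a k = RtoC 0) -> Cis_series a (csum K a).
Proof.
  intros H. unfold Cis_series, is_series.
  apply filterlim_ext_loc with (fun _ => csum K a).
  - exists K. intros n Hn. change (csum K a = @sum_n C_AbelianMonoid a n).
    rewrite sum_n_csum. symmetry. apply csum_tail_zero; auto.
  - apply filterlim_const.
Qed.

Lemma Cis_minus a b la lb : Cis_series a la -> Cis_series b lb ->
  Cis_series (fun k => Cminus (a k) (b k)) (Cminus la lb).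
Proof. intros H1 H2. exact (is_series_minus (V:=C_NormedModule) a b la lb H1 H2). Qed.

Lemma Cis_plus a b la lb : Cis_series a la -> Cis_series b lb ->
  Cis_series (fun k => Cplus (a k) (b k)) (Cplus la lb).
Proof. intros H1 H2. exact (is_series_plus (V:=C_NormedModule) a b la lb H1 H2). Qed.

Lemma Cis_scal c a la : Cis_series a la -> Cis_series (fun k => Cmult c (a k)) (Cmult c la).
Proof. intros H1. exact (is_series_scal (V:=C_NormedModule) c a la H1). Qed.

Lemma Cis_ext a b l : (forall k, a k = b k) -> Cis_series a l -> Cis_series b l.
Proof. intros H1 H2. exact (is_series_ext (V:=C_NormedModule) a b l H1 H2). Qed.

Lemma Cis_shift a l : a 0%nat = RtoC 0 -> Cis_series a l -> Cis_series (fun k => a (S k)) l.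
Proof.
  intros H0 H. apply (is_series_incr_1 (V:=C_NormedModule) a l).
  rewrite H0. change (plus l (RtoC 0)) with (Cplus l (RtoC 0)). rewrite Cplus_0_r. exact H.
Qed.

Lemma x_lt_exp x : 0 <= x -> x < exp x.
Proof.
  intros H. destruct (Req_dec x 0) as [->|Hx]. rewrite exp_0; lra.
  pose proof (exp_ineq1 x Hx). lra.
Qed.

Lemma kq_bound s : 0 <= s < 1 -> exists Cc, forall k, INR (S k) * s ^ k <= Cc.
Proof.
  intros Hs. destruct (Req_dec s 0) as [->|Hs0].
  - exists 1. intros [|k]; simpl. lra. rewrite Rmult_0_l, Rmult_0_r. lra.
  - assert (Hsp : 0 < s) by lra.
    assert (Hl : ln s < 0). { rewrite <- ln_1. apply ln_increasing; lra. }
    set (t := - ln s). assert (Ht : 0 < t) by (unfold t; lra).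
    exists (/ t + 1). intros k.
    rewrite <- Rpower_pow by lra. unfold Rpower.
    rewrite S_INR.
    assert (E : exp (INR k * ln s) * exp (INR k * t) = 1).
    { rewrite <- exp_plus. unfold t. replace (INR k * ln s + INR k * - ln s) with 0 by ring. apply exp_0. }
    pose proof (x_lt_exp (INR k * t) ltac:(apply Rmult_le_pos; [apply pos_INR|lra])) as H1.
    assert (H2 : exp (INR k * ln s) <= 1).
    { rewrite <- exp_0. destruct k. simpl. rewrite Rmult_0_l. lra.
      left. apply exp_increasing. pose proof (pos_INR k). rewrite S_INR. nra. }
    set (e := exp (INR k * ln s)) in *. set (F := exp (INR k * t)) in *.
    assert (0 < e) by apply exp_pos.
    assert (INR k * t * e < 1) by nra.
    assert (INR k * e < / t).
    { apply Rmult_lt_reg_r with t. auto. rewrite Rinv_l by lra. nra. }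
    nra.
Qed.

Definition Good (Rr : R) (a : nat -> C) :=
  forall rho, 0 <= rho < Rr -> exists M, forall k, Cmod (a k) * rho ^ k <= M.

Definition dcoef (a : nat -> C) (k : nat) : C := Cmult (RtoC (INR (S k))) (a (S k)).
Fixpoint dco (j : nat) (a : nat -> C) : nat -> C :=
  match j with O => a | S j' => dcoef (dco j' a) end.

Definition PS (a : nat -> C) (z : C) : C := Cser (fun k => Cmult (a k) (Cpow z k)).

Lemma Good_M_nonneg (a : nat -> C) rho M : (forall k, Cmod (a k) * rho ^ k <= M) -> 0 <= M.
Proof. intros H. specialize (H 0%nat). simpl in H. pose proof (Cmod_ge_0 (a 0%nat)). lra. Qed.

Lemma Good_sum Rr a rho : Good Rr a -> 0 <= rho < Rr ->
  ex_series (fun k => INR (S k) * Cmod (a k) * rho ^ k).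
Proof.
  intros HG Hr. set (r' := (rho + Rr) / 2).
  destruct (HG r' ltac:(unfold r'; lra)) as [M HM].
  pose proof (Good_M_nonneg a r' M HM) as HM0.
  set (q := rho / r'). assert (Hq : 0 <= q < 1).
  { unfold q, r'. split. apply Rmult_le_pos; [lra|]. left; apply Rinv_0_lt_compat; lra.
    apply Rmult_lt_reg_r with ((rho + Rr)/2). lra. unfold Rdiv. rewrite Rmult_assoc, Rinv_l by lra. lra. }
  set (sq := sqrt q). assert (Hsq : 0 <= sq < 1).
  { unfold sq. split. apply sqrt_pos. rewrite <- sqrt_1. apply sqrt_lt_1_alt. lra. }
  destruct (kq_bound sq Hsq) as [Cc HC].
  apply (ex_series_le (V:=R_CompleteNormedModule) _ (fun k => (Cc * M) * sq ^ k)).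
  - intros k. change (norm (INR (S k) * Cmod (a k) * rho ^ k)) with (Rabs (INR (S k) * Cmod (a k) * rho ^ k)).
    assert (0 <= INR (S k) * Cmod (a k) * rho ^ k).
    { apply Rmult_le_pos. apply Rmult_le_pos. apply pos_INR. apply Cmod_ge_0. apply pow_le; lra. }
    rewrite Rabs_pos_eq by auto.
    assert (Erho : rho = q * r') by (unfold q; field; unfold r'; lra).
    assert (Eq : q ^ k = sq ^ k * sq ^ k).
    { rewrite <- Rpow_mult_distr. unfold sq. rewrite sqrt_sqrt; lra. }
    rewrite Erho, Rpow_mult_distr, Eq.
    specialize (HM k). specialize (HC k).
    assert (0 <= sq ^ k) by (apply pow_le; lra).
    assert (0 <= INR (S k) * sq ^ k) by (apply Rmult_le_pos; [apply pos_INR|auto]).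
    replace (INR (S k) * Cmod (a k) * (sq ^ k * sq ^ k * r' ^ k)) with
      ((INR (S k) * sq ^ k) * (Cmod (a k) * r' ^ k) * sq ^ k) by ring.
    apply Rmult_le_compat_r; auto.
    apply Rmult_le_compat; auto. apply Rmult_le_pos. apply Cmod_ge_0. apply pow_le. unfold r'; lra.
  - destruct (ex_series_geom sq ltac:(rewrite Rabs_pos_eq; lra)) as [L HL]. exists (Cc * M * L). apply (is_series_scal_l (V:=R_NormedModule) (Cc * M) _ L HL).
Qed.

Lemma Good_sum0 Rr a rho : Good Rr a -> 0 <= rho < Rr ->
  ex_series (fun k => Cmod (a k) * rho ^ k).
Proof.
  intros HG Hr. apply (ex_series_le (V:=R_CompleteNormedModule) _ (fun k => INR (S k) * Cmod (a k) * rho ^ k)).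
  2: exact (Good_sum Rr a rho HG Hr).
  intros k. change (norm (Cmod (a k) * rho ^ k)) with (Rabs (Cmod (a k) * rho ^ k)).
  assert (0 <= Cmod (a k) * rho ^ k) by (apply Rmult_le_pos; [apply Cmod_ge_0|apply pow_le; lra]).
  rewrite Rabs_pos_eq by auto. rewrite S_INR. pose proof (pos_INR k). nra.
Qed.

Lemma Good_le Rr a b : (forall k, Cmod (b k) <= Cmod (a k)) -> Good Rr a -> Good Rr b.
Proof.
  intros H HG rho Hr. destruct (HG rho Hr) as [M HM]. exists M. intros k.
  eapply Rle_trans. 2: apply HM. apply Rmult_le_compat_r. apply pow_le; lra. auto.
Qed.

Lemma Good_dcoef Rr a : Good Rr a -> Good Rr (dcoef a).
Proof.
  intros HG rho Hr. set (r' := (rho + Rr) / 2).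
  destruct (HG r' ltac:(unfold r'; lra)) as [M HM].
  pose proof (Good_M_nonneg a r' M HM) as HM0.
  set (q := rho / r'). assert (Hq : 0 <= q < 1).
  { unfold q, r'. split. apply Rmult_le_pos; [lra|]. left; apply Rinv_0_lt_compat; lra.
    apply Rmult_lt_reg_r with ((rho + Rr)/2). lra. unfold Rdiv. rewrite Rmult_assoc, Rinv_l by lra. lra. }
  destruct (kq_bound q Hq) as [Cc HC].
  assert (Hr' : 0 < r') by (unfold r'; lra).
  exists (Cc * M / r'). intros k. unfold dcoef.
  rewrite Cmod_mult, Cmod_R, Rabs_pos_eq by apply pos_INR.
  assert (Erho : rho = q * r') by (unfold q; field; lra).
  rewrite Erho, Rpow_mult_distr.
  specialize (HM (S k)). specialize (HC k). simpl in HM.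
  assert (0 <= q ^ k) by (apply pow_le; lra).
  assert (0 <= INR (S k) * q ^ k) by (apply Rmult_le_pos; [apply pos_INR|auto]).
  assert (Cmod (a (S k)) * r' ^ k <= M / r').
  { apply Rmult_le_reg_r with r'. auto. unfold Rdiv. rewrite (Rmult_assoc M), Rinv_l by lra. rewrite Rmult_1_r. simpl in HM. lra. }
  replace (INR (S k) * Cmod (a (S k)) * (q ^ k * r' ^ k)) with
    ((INR (S k) * q ^ k) * (Cmod (a (S k)) * r' ^ k)) by ring.
  unfold Rdiv. rewrite (Rmult_assoc Cc).
  apply Rmult_le_compat; auto. apply Rmult_le_pos. apply Cmod_ge_0. apply pow_le; lra.
Qed.

Lemma Good_dco Rr a j : Good Rr a -> Good Rr (dco j a).
Proof. intros H; induction j; simpl; auto. apply Good_dcoef; auto. Qed.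

Lemma PS_is Rr a z : Good Rr a -> Cmod z < Rr -> Cis_series (fun k => Cmult (a k) (Cpow z k)) (PS a z).
Proof.
  intros HG Hz. unfold PS. apply Cser_spec. apply Cex.
  eapply ex_series_ext. 2: apply (Good_sum0 Rr a (Cmod z) HG). 2: split; [apply Cmod_ge_0|auto].
  intros k. simpl. rewrite Cmod_mult, Cmod_pow. auto.
Qed.

Lemma PS_bound Rr a z rho b L : Good Rr a -> Cmod z <= rho -> rho < Rr -> is_series b L ->
  (forall k, Cmod (a k) * rho ^ k <= b k) -> Cmod (PS a z) <= L.
Proof.
  intros HG Hz Hr Hb H. assert (Cmod z < Rr) by lra.
  apply (Cnorm_le _ _ _ _ (PS_is Rr a z HG H0) Hb).
  intros k. rewrite Cmod_mult, Cmod_pow. eapply Rle_trans. 2: apply H.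
  apply Rmult_le_compat_l. apply Cmod_ge_0. apply pow_incr. split; auto. apply Cmod_ge_0.
Qed.

Definition Ek (w z : C) (k : nat) : C :=
  Cminus (Cminus (Cpow w (S k)) (Cpow z (S k)))
         (Cmult (Cmult (RtoC (INR (S k))) (Cpow z k)) (Cminus w z)).

Lemma Ek_rec w z k : Ek w z (S k) =
  Cplus (Cmult w (Ek w z k)) (Cmult (Cmult (RtoC (INR (S k))) (Cpow z k)) (Cmult (Cminus w z) (Cminus w z))).
Proof.
  unfold Ek. rewrite !Cpow_S. rewrite (S_INR (S k)). rewrite RtoC_plus. ring.
Qed.

Lemma Ek_bound w z rho k : 0 < rho -> Cmod w <= rho -> Cmod z <= rho ->
  rho * Cmod (Ek w z k) <= INR (S k) ^ 2 * rho ^ k * Cmod (Cminus w z) ^ 2.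
Proof.
  intros Hr Hw Hz. set (h := Cmod (Cminus w z)).
  assert (Hh : 0 <= h) by apply Cmod_ge_0.
  induction k.
  - unfold Ek. simpl. replace (Cminus (Cminus (Cmult w 1) (Cmult z 1)) (Cmult (Cmult 1 1) (Cminus w z))) with (RtoC 0) by ring.
    rewrite Cmod_0. simpl. nra.
  - rewrite Ek_rec. 
    eapply Rle_trans. { apply Rmult_le_compat_l. lra. apply Cmod_triangle. }
    rewrite !Cmod_mult, Cmod_R, Rabs_pos_eq by apply pos_INR. rewrite Cmod_pow. fold h.
    pose proof (Cmod_ge_0 (Ek w z k)) as HE.
    assert (Hzk : Cmod z ^ k <= rho ^ k) by (apply pow_incr; split; [apply Cmod_ge_0|auto]).
    assert (0 <= Cmod z ^ k) by (apply pow_le, Cmod_ge_0).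
    assert (H1 : rho * (Cmod w * Cmod (Ek w z k)) <= rho * (INR (S k) ^ 2 * rho ^ k * h ^ 2)).
    { replace (rho * (Cmod w * Cmod (Ek w z k))) with (Cmod w * (rho * Cmod (Ek w z k))) by ring.
      replace (rho * (INR (S k) ^ 2 * rho ^ k * h ^ 2)) with (rho * (INR (S k) ^ 2 * rho ^ k * h ^ 2)) by ring.
      apply Rmult_le_compat; auto. apply Cmod_ge_0. apply Rmult_le_pos; lra. }
    assert (H2 : INR (S k) * Cmod z ^ k * (h * h) <= INR (S k) * rho ^ k * (h * h)).
    { apply Rmult_le_compat_r. nra. apply Rmult_le_compat_l. apply pos_INR. auto. }
    rewrite (S_INR (S k)). set (K := INR (S k)) in *. rewrite <- tech_pow_Rmult.
    assert (HK : 0 <= K) by (unfold K; apply pos_INR).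
    assert (0 <= rho ^ k) by (apply pow_le; lra).
    set (P := rho * rho ^ k * (h * h)).
    assert (HP : 0 <= P) by (unfold P; apply Rmult_le_pos; [apply Rmult_le_pos|]; nra).
    assert (E1 : rho * (K ^ 2 * rho ^ k * h ^ 2) = K * K * P) by (unfold P; ring).
    assert (E2 : rho * (K * Cmod z ^ k * (h * h)) <= K * P).
    { unfold P. replace (K * (rho * rho ^ k * (h * h))) with (rho * (K * rho ^ k * (h * h))) by ring.
      apply Rmult_le_compat_l; lra. }
    replace ((K + 1) ^ 2 * (rho * rho ^ k) * h ^ 2) with ((K+1)*(K+1) * P) by (unfold P; ring).
    rewrite Rmult_plus_distr_l. rewrite E1 in H1. assert (0 <= K * P) by (apply Rmult_le_pos; auto). match goal with |- _ <= ?R => replace R with ((K+1)*(K+1)*P) by (unfold P; simpl; ring) end. nra.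
Qed.

Lemma PS_D Rr a z : Good Rr a -> Cmod z < Rr -> CD (PS a) z (PS (dcoef a) z).
Proof.
  intros HG Hz. pose proof (Cmod_ge_0 z) as Hz0.
  set (r1 := (Cmod z + Rr) / 2).
  assert (Hr1 : Cmod z < r1 < Rr) by (unfold r1; lra).
  pose proof (Good_dcoef Rr a HG) as HG'.
  pose proof (Series_correct _ (Good_sum Rr (dcoef a) r1 HG' ltac:(lra))) as HSd.
  set (Sd := Series (fun k => INR (S k) * Cmod (dcoef a k) * r1 ^ k)) in *.
  set (S1 := Rabs Sd + 1). assert (HS1 : 0 < S1) by (unfold S1; pose proof (Rabs_pos Sd); lra).
  apply is_derive_C_intro. intros eps Heps.
  assert (Hr1p : 0 < r1) by lra.
  exists (Rmin (r1 - Cmod z) (eps * r1 / S1)). split.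
  { apply Rmin_glb_lt. lra. apply Rmult_lt_0_compat. nra. apply Rinv_0_lt_compat; auto. }
  intros w Hw.
  assert (Hwa : Cmod (w - z) < r1 - Cmod z) by (eapply Rlt_le_trans; [exact Hw|apply Rmin_l]).
  assert (Hwb : Cmod (w - z) < eps * r1 / S1) by (eapply Rlt_le_trans; [exact Hw|apply Rmin_r]).
  assert (Hwr : Cmod w <= r1).
  { replace w with (Cplus z (Cminus w z)) by ring. eapply Rle_trans. apply Cmod_triangle. lra. }
  assert (Hw' : Cmod w < Rr) by lra.
  pose proof (PS_is Rr a w HG Hw') as H1.
  pose proof (PS_is Rr a z HG Hz) as H2.
  pose proof (PS_is Rr (dcoef a) z HG' Hz) as H3.
  pose proof (Cis_minus _ _ _ _ H1 H2) as H4.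
  apply Cis_shift in H4. 2: { simpl. ring. }
  pose proof (Cis_scal (Cminus w z) _ _ H3) as H5.
  pose proof (Cis_minus _ _ _ _ H4 H5) as H6.
  apply (Cis_ext _ (fun k => Cmult (a (S k)) (Ek w z k))) in H6.
  2: { intros k. unfold Ek, dcoef. ring. }
  set (h := Cmod (w - z)) in *.
  assert (Hh : 0 <= h) by apply Cmod_ge_0.
  pose proof (is_series_scal_r (h * h / r1) _ _ HSd) as H7.
  eapply Rle_trans. apply (Cnorm_le _ _ _ _ H6 H7).
  - intros k. rewrite Cmod_mult. unfold dcoef. rewrite Cmod_mult, Cmod_R, Rabs_pos_eq by apply pos_INR.
    pose proof (Ek_bound w z r1 k Hr1p Hwr ltac:(lra)) as HE. fold h in HE.
    pose proof (Cmod_ge_0 (a (S k))) as Ha.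
    assert (Cmod (Ek w z k) <= INR (S k) ^ 2 * r1 ^ k * h ^ 2 / r1).
    { apply Rmult_le_reg_l with r1. auto. unfold Rdiv. rewrite <- Rmult_assoc.
      replace (r1 * (INR (S k) ^ 2 * r1 ^ k * h ^ 2) * / r1) with (INR (S k) ^ 2 * r1 ^ k * h ^ 2) by (field; lra).
      auto. }
    replace (INR (S k) * (INR (S k) * Cmod (a (S k))) * r1 ^ k * (h * h / r1)) with
      (Cmod (a (S k)) * (INR (S k) ^ 2 * r1 ^ k * h ^ 2 / r1)) by (field; lra).
    apply Rmult_le_compat_l; auto.
  - assert (Sd <= S1) by (unfold S1; pose proof (Rle_abs Sd); lra).
    assert (h * S1 <= eps * r1).
    { apply Rmult_le_reg_r with (/ S1). apply Rinv_0_lt_compat; auto.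
      rewrite Rmult_assoc, Rinv_r by lra. unfold Rdiv in Hwb. lra. }
    apply Rmult_le_reg_r with r1. auto.
    replace (Sd * (h * h / r1) * r1) with (Sd * h * h) by (field; lra).
    assert (Sd * h * h <= S1 * h * h) by (apply Rmult_le_compat_r; auto; apply Rmult_le_compat_r; auto).
    nra.
Qed.

Lemma dco_S j a k : dco (S j) a k = Cmult (RtoC (INR (S k))) (dco j a (S k)).
Proof. reflexivity. Qed.

Lemma dco_zero a K : (forall k, (k < K)%nat -> a k = RtoC 0) ->
  forall j k, (k + j < K)%nat -> dco j a k = RtoC 0.
Proof.
  intros H j. induction j; intros k Hk.
  - simpl. apply H. lia.
  - rewrite dco_S. rewrite IHj by lia. ring.
Qed.

Definition mask (K : nat) (a : nat -> C) (k : nat) : C := if Nat.leb K k then a k else RtoC 0.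

Lemma dco_mask K a j k : dco j (mask K a) k = if Nat.leb K (k + j) then dco j a k else RtoC 0.
Proof.
  revert k; induction j; intros k.
  - simpl. unfold mask. rewrite Nat.add_0_r. auto.
  - rewrite !dco_S. rewrite IHj. replace (S k + j)%nat with (k + S j)%nat by lia.
    destruct (Nat.leb K (k + S j)); auto. ring.
Qed.


Definition PSf (a : nat -> C) (j : nat) (z : C) : C := PS (dco j a) z.

Lemma PSf_D U Rr a : Good Rr a -> (forall z, U z -> Cmod z < Rr) -> Dfam U (PSf a).
Proof.
  intros HG HU j z Hz. unfold PSf. simpl dco. apply (PS_D Rr). apply Good_dco; auto. auto.
Qed.

Lemma pow_shift_le r eps (k j K : nat) : 0 < r <= eps -> (K <= k + j)%nat ->
  r ^ k <= eps ^ k * powerRZ eps (Z.of_nat j - Z.of_nat K) * powerRZ r (Z.of_nat K - Z.of_nat j).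
Proof.
  intros Hr Hk. set (n := (k + j - K)%nat).
  assert (Ek : Z.of_nat k = ((Z.of_nat K - Z.of_nat j) + Z.of_nat n)%Z) by (unfold n; lia).
  rewrite !pow_powerRZ. rewrite Ek. rewrite !powerRZ_add by lra.
  assert (E1 : powerRZ eps (Z.of_nat K - Z.of_nat j) * powerRZ eps (Z.of_nat j - Z.of_nat K) = 1).
  { rewrite <- powerRZ_add by lra. replace (Z.of_nat K - Z.of_nat j + (Z.of_nat j - Z.of_nat K))%Z with 0%Z by lia. auto. }
  rewrite <- !pow_powerRZ.
  assert (r ^ n <= eps ^ n) by (apply pow_incr; lra).
  assert (0 < powerRZ r (Z.of_nat K - Z.of_nat j)) by (apply powerRZ_lt; lra).
  replace (powerRZ eps (Z.of_nat K - Z.of_nat j) * eps ^ n * powerRZ eps (Z.of_nat j - Z.of_nat K) *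
     powerRZ r (Z.of_nat K - Z.of_nat j)) with
    ((powerRZ eps (Z.of_nat K - Z.of_nat j) * powerRZ eps (Z.of_nat j - Z.of_nat K)) * (eps ^ n *
     powerRZ r (Z.of_nat K - Z.of_nat j))) by ring.
  rewrite E1. nra.
Qed.

Lemma PSf_Bnd U Rr a K eps : Good Rr a -> (forall k, (k < K)%nat -> a k = RtoC 0) -> 0 < eps < Rr ->
  Udom U -> (forall z, U z -> Cmod z <= eps) -> Bnd U (PSf a) (Z.of_nat K) 0.
Proof.
  intros HG HK He HU Hue j.
  pose proof (Good_dco Rr a j HG) as HGj.
  pose proof (Series_correct _ (Good_sum0 Rr (dco j a) eps HGj ltac:(lra))) as HSe.
  set (Se := Series (fun k => Cmod (dco j a k) * eps ^ k)) in *.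
  exists (Rabs Se * powerRZ eps (Z.of_nat j - Z.of_nat K)). split.
  { apply Rmult_le_pos. apply Rabs_pos. apply powerRZ_le; lra. }
  intros z Hz. pose proof (HU z Hz) as Hr. pose proof (Hue z Hz) as Hre.
  set (c := powerRZ eps (Z.of_nat j - Z.of_nat K) * powerRZ (Cmod z) (Z.of_nat K - Z.of_nat j)).
  assert (Hc : 0 <= c) by (unfold c; apply Rmult_le_pos; apply powerRZ_le; lra).
  pose proof (is_series_scal_r c _ _ HSe) as H1.
  unfold PSf. eapply Rle_trans. apply (Cnorm_le _ _ _ _ (PS_is Rr (dco j a) z HGj ltac:(lra)) H1).
  - intros k. rewrite Cmod_mult, Cmod_pow.
    destruct (le_lt_dec K (k + j)) as [Hkj|Hkj].
    + pose proof (pow_shift_le (Cmod z) eps k j K ltac:(lra) Hkj).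
      unfold c.
      replace (Cmod (dco j a k) * eps ^ k * (powerRZ eps (Z.of_nat j - Z.of_nat K) * powerRZ (Cmod z) (Z.of_nat K - Z.of_nat j)))
        with (Cmod (dco j a k) * (eps ^ k * powerRZ eps (Z.of_nat j - Z.of_nat K) * powerRZ (Cmod z) (Z.of_nat K - Z.of_nat j))) by ring.
      apply Rmult_le_compat_l. apply Cmod_ge_0. auto.
    + rewrite (dco_zero a K HK j k Hkj). rewrite Cmod_0. rewrite !Rmult_0_l. lra.
  - unfold W, c. simpl pow. rewrite Rmult_1_r. 
    assert (Se <= Rabs Se) by apply Rle_abs.
    assert (0 <= powerRZ eps (Z.of_nat j - Z.of_nat K) * powerRZ (Cmod z) (Z.of_nat K - Z.of_nat j)) by auto.
    rewrite !Rmult_assoc. apply Rmult_le_compat_r; auto.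
Qed.

Lemma Good_mask Rr K a : Good Rr a -> Good Rr (mask K a).
Proof.
  apply Good_le. intros k. unfold mask. destruct (Nat.leb K k). lra. rewrite Cmod_0. apply Cmod_ge_0.
Qed.

Lemma pow_le_N s N k : 0 <= s <= 1 -> (N <= k)%nat -> s ^ k <= s ^ N.
Proof.
  intros Hs Hk. replace k with (N + (k - N))%nat by lia. rewrite pow_add.
  assert (0 <= s ^ N) by (apply pow_le; lra).
  assert (s ^ (k - N) <= 1). { rewrite <- (pow1 (k - N)). apply pow_incr. lra. }
  assert (0 <= s ^ (k - N)) by (apply pow_le; lra). nra.
Qed.

Lemma PSf_tail Rr a eps j : Good Rr a -> 0 < eps < Rr -> forall eta, 0 < eta ->
  exists K0, forall K z, (K0 <= K)%nat -> Cmod z <= eps -> Cmod (PSf (mask K a) j z) <= eta.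
Proof.
  intros HG He eta Heta.
  set (r' := (eps + Rr) / 2).
  destruct (Good_dco Rr a j HG r' ltac:(unfold r'; lra)) as [M HM].
  pose proof (Good_M_nonneg _ r' M HM) as HM0.
  set (q := eps / r'). assert (Hq : 0 <= q < 1).
  { unfold q, r'. split. apply Rmult_le_pos; [lra|]. left; apply Rinv_0_lt_compat; lra.
    apply Rmult_lt_reg_r with ((eps + Rr)/2). lra. unfold Rdiv. rewrite Rmult_assoc, Rinv_l by lra. lra. }
  set (s := sqrt q). assert (Hs : 0 <= s < 1).
  { unfold s. split. apply sqrt_pos. rewrite <- sqrt_1. apply sqrt_lt_1_alt. lra. }
  assert (Hss : s * s = q) by (unfold s; apply sqrt_sqrt; lra).
  set (y := eta * (1 - s) / (M + 1)).
  assert (Hy : 0 < y) by (unfold y; apply Rmult_lt_0_compat; [nra|apply Rinv_0_lt_compat; lra]).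
  destruct (pow_lt_1_zero s ltac:(rewrite Rabs_pos_eq; lra) y Hy) as [N HN].
  exists (N + j)%nat. intros K z HK Hz.
  pose proof (HN N (le_n N)) as HsN. rewrite Rabs_pos_eq in HsN by (apply pow_le; lra).
  pose proof (is_series_geom s ltac:(rewrite Rabs_pos_eq; lra)) as Hgeo.
  pose proof (is_series_scal_l (V:=R_NormedModule) (M * s ^ N) _ _ Hgeo) as H1.
  pose proof (Good_dco Rr _ j (Good_mask Rr K a HG)) as HGm.
  unfold PSf. eapply Rle_trans. apply (Cnorm_le _ _ _ _ (PS_is Rr _ z HGm ltac:(lra)) H1).
  - intros k. rewrite Cmod_mult, Cmod_pow, dco_mask. change (scal (M * s ^ N) (s ^ k)) with (M * s ^ N * s ^ k).
    assert (0 <= s ^ N) by (apply pow_le; lra). assert (0 <= s ^ k) by (apply pow_le; lra).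
    destruct (Nat.leb K (k + j)) eqn:E.
    + apply Nat.leb_le in E.
      specialize (HM k).
      assert (Hrk : Cmod z ^ k <= eps ^ k) by (apply pow_incr; split; [apply Cmod_ge_0|auto]).
      assert (Eeps : eps ^ k = r' ^ k * (s ^ k * s ^ k)).
      { rewrite <- Rpow_mult_distr, Hss, <- Rpow_mult_distr. f_equal. unfold q. field. unfold r'; lra. }
      assert (HskN : s ^ k <= s ^ N) by (apply pow_le_N; lia || lra).
      eapply Rle_trans. apply Rmult_le_compat_l. apply Cmod_ge_0. exact Hrk.
      rewrite Eeps. 
      replace (Cmod (dco j a k) * (r' ^ k * (s ^ k * s ^ k))) with ((Cmod (dco j a k) * r' ^ k) * s ^ k * s ^ k) by ring.
      apply Rmult_le_compat_r; auto. apply Rmult_le_compat; auto.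
      apply Rmult_le_pos. apply Cmod_ge_0. apply pow_le; unfold r'; lra.
    + rewrite Cmod_0, Rmult_0_l. apply Rmult_le_pos; auto. apply Rmult_le_pos; auto.
  - change (scal (M * s ^ N) (/ (1 - s))) with (M * s ^ N * / (1 - s)).
    apply Rmult_le_reg_r with (1 - s). lra. rewrite Rmult_assoc, Rinv_l by lra.
    assert (M * s ^ N <= M * y) by (apply Rmult_le_compat_l; lra).
    assert (M * y <= eta * (1 - s)).
    { unfold y. apply Rmult_le_reg_r with (M + 1). lra. unfold Rdiv.
      replace (M * (eta * (1 - s) * / (M + 1)) * (M + 1)) with (M * (eta * (1 - s))) by (field; lra).
      assert (0 <= eta * (1 - s)) by nra. nra. }
    lra.
Qed.

Lemma csum_mult_r n f c : Cmult (csum n f) c = csum n (fun k => Cmult (f k) c).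
Proof. induction n; simpl. ring. rewrite <- IHn. ring. Qed.

Definition coefv (l : nat) : C := Cdiv (Cpow cst l) (RtoC (INR (fact l))).

Definition Fam (m n : nat) (N : Mat) (b : nat -> nat -> nat -> C) (j : nat) (z : C) : Vec :=
  fun i => csum (S n) (fun l => csum m (fun p =>
     Cmult (Cmult (coefv l) (matpow m N l i p)) (pfam (Lp l) (PSf (b l p)) j z))).

Lemma Fam_D m n N b U Rr i : (forall l p, (p < m)%nat -> Good Rr (b l p)) -> (forall z, U z -> slit z /\ Cmod z < Rr) ->
  Dfam U (fun j z => Fam m n N b j z i).
Proof.
  intros HG HU. unfold Fam.
  apply Dfam_csum. intros l _. apply Dfam_csum. intros p Hp. apply Dfam_scal.
  apply pfam_D. apply Lp_D. intros z Hz; apply HU; auto.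
  apply (PSf_D U Rr). auto. intros z Hz; apply HU; auto.
Qed.

Lemma Fam_0 m n N b z i : Fam m n N b 0 z i =
  csum (S n) (fun l => csum m (fun p => Cmult (Cmult (coefv l) (matpow m N l i p))
     (Cmult (Cpow (log1z z) l) (PS (b l p) z)))).
Proof.
  unfold Fam. apply csum_ext; intros l _. apply csum_ext; intros p _.
  rewrite pfam_0, Lp_0. reflexivity.
Qed.

Lemma Omega_expand m n N Aval z i : Omega m n N Aval z i =
  csum (S n) (fun l => csum m (fun p => Cmult (Cmult (coefv l) (matpow m N l i p))
     (Cmult (Cpow (log1z z) l) (Aval z p)))).
Proof.
  unfold Omega. apply csum_ext; intros l _. unfold matvec. rewrite <- csum_scal.
  apply csum_ext; intros p _. unfold coefv, Cdiv. rewrite Cpow_mult_l. ring.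
Qed.

Lemma Omega_minus_Fam m n N A Aval b z i K (sel : nat -> nat -> C) :
  (forall l p, (l < S n)%nat -> (p < m)%nat ->
     Cminus (Aval z p) (PS (b l p) z) = csum K (fun k => Cmult (Cmult (sel l k) (A k p)) (Cpow z k))) ->
  Cminus (Omega m n N Aval z i) (Fam m n N b 0 z i) =
  csum K (fun k => csum (S n) (fun l => Cmult (sel l k) (Cmult (Akl m N A k l i) (fkl k l z)))).
Proof.
  intros H. rewrite Omega_expand, Fam_0, <- csum_minus.
  transitivity (csum (S n) (fun l => csum m (fun p => csum K (fun k =>
     Cmult (Cmult (Cmult (coefv l) (matpow m N l i p)) (Cpow (log1z z) l))
        (Cmult (Cmult (sel l k) (A k p)) (Cpow z k)))))).
  { apply csum_ext; intros l Hl. rewrite <- csum_minus. apply csum_ext; intros p Hp.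
    rewrite csum_scal. rewrite <- H by auto. ring. }
  transitivity (csum (S n) (fun l => csum K (fun k => csum m (fun p =>
     Cmult (Cmult (Cmult (coefv l) (matpow m N l i p)) (Cpow (log1z z) l))
        (Cmult (Cmult (sel l k) (A k p)) (Cpow z k)))))).
  { apply csum_ext; intros l Hl. apply csum_swap. }
  rewrite csum_swap. apply csum_ext; intros k Hk.
  apply csum_ext; intros l Hl.
  unfold Akl, fkl, matvec.
  rewrite <- (csum_scal m (Cdiv (Cpow cst l) (RtoC (INR (fact l))))).
  rewrite csum_mult_r, <- csum_scal.
  apply csum_ext; intros p Hp. unfold coefv. ring.
Qed.

Lemma Cis_bounded a l : Cis_series a l -> exists M, forall k, Cmod (a k) <= M.
Proof.
  intros H. unfold Cis_series, is_series in H.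
  pose proof (proj1 (filterlim_locally_ball_norm (K:=C_AbsRing) (U:=C_NormedModule) (F:=eventually) (sum_n a) l) H) as H0. clear H. rename H0 into H.
  destruct (H (mkposreal 1 Rlt_0_1)) as [N HN].
  exists (2 + rsum (S N) (fun k => Cmod (a k))). intros k.
  destruct (le_lt_dec k N) as [Hk|Hk].
  - assert (Cmod (a k) <= rsum (S N) (fun k => Cmod (a k))).
    { clear -Hk. induction N; simpl.
      + replace k with 0%nat by lia. pose proof (Cmod_ge_0 (a 0%nat)). lra.
      + destruct (Nat.eq_dec k (S N)) as [->|Hne]. 
        * pose proof (rsum_nonneg (S N) (fun k => Cmod (a k)) (fun k _ => Cmod_ge_0 _)). simpl in H. lra.
        * specialize (IHN ltac:(lia)). simpl in IHN. pose proof (Cmod_ge_0 (a (S N))). lra. }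
    assert (0 <= rsum (S N) (fun k => Cmod (a k))) by (apply rsum_nonneg; intros; apply Cmod_ge_0). lra.
  - destruct k as [|k]. lia.
    pose proof (HN k ltac:(lia)) as H1. pose proof (HN (S k) ltac:(lia)) as H2.
    unfold ball_norm in H1, H2. simpl in H1, H2.
    change (Cmod (Cminus (@sum_n C_AbelianMonoid a k) l) < 1) in H1.
    change (Cmod (Cminus (@sum_n C_AbelianMonoid a (S k)) l) < 1) in H2.
    rewrite !sum_n_csum in *. simpl in H2.
    replace (a (S k)) with (Cminus (Cminus (Cplus (csum (S k) a) (a (S k))) l) (Cminus (csum (S k) a) l)) by ring.
    eapply Rle_trans. unfold Cminus at 1. apply Cmod_triangle. rewrite Cmod_opp.
    assert (0 <= rsum (S N) (fun k => Cmod (a k))) by (apply rsum_nonneg; intros; apply Cmod_ge_0). 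
    simpl csum in *. lra.
Qed.

Lemma Good_of_series (A : nat -> Vec) (Aval : C -> Vec) delta p :
  (forall (z : C), Cmod z < delta -> Cis_series (fun j => Cmult (A j p) (Cpow z j)) (Aval z p)) ->
  Good delta (fun k => A k p).
Proof.
  intros H rho Hr. 
  assert (Hz : Cmod (RtoC rho) < delta) by (rewrite Cmod_R, Rabs_pos_eq; lra).
  destruct (Cis_bounded _ _ (H _ Hz)) as [M HM]. exists M. intros k.
  specialize (HM k). rewrite Cmod_mult, Cmod_pow, Cmod_R, Rabs_pos_eq in HM by lra. auto.
Qed.

Lemma Aval_minus_PS Rr (a b : nat -> C) (av : C) z K (sel : nat -> C) :
  Cis_series (fun k => Cmult (a k) (Cpow z k)) av -> Good Rr b -> Cmod z < Rr ->
  (forall k, (K <= k)%nat -> a k = b k) ->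
  (forall k, (k < K)%nat -> Cminus (a k) (b k) = Cmult (sel k) (a k)) ->
  Cminus av (PS b z) = csum K (fun k => Cmult (Cmult (sel k) (a k)) (Cpow z k)).
Proof.
  intros Ha HG Hz H1 H2.
  pose proof (Cis_minus _ _ _ _ Ha (PS_is Rr b z HG Hz)) as H3.
  pose proof (Cis_finite (fun k => Cminus (Cmult (a k) (Cpow z k)) (Cmult (b k) (Cpow z k))) K) as H4.
  rewrite (Cis_unique _ _ _ H3 (H4 ltac:(intros k Hk; cbv beta; rewrite H1 by auto; ring))).
  apply csum_ext. intros k Hk. rewrite <- H2 by auto. ring.
Qed.

Lemma ln_le' x y : 0 < x -> x <= y -> ln x <= ln y.
Proof. intros Hx Hxy. destruct (Req_dec x y) as [->|Hne]. lra. left. apply ln_increasing; lra. Qed.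

Lemma exp_pow_INR y l : exp y ^ l = exp (INR l * y).
Proof.
  induction l. simpl. rewrite Rmult_0_l, exp_0. auto.
  rewrite S_INR. simpl. rewrite IHl. rewrite <- exp_plus. f_equal. ring.
Qed.

Lemma pow_le_exp x l : 0 <= x -> x ^ l <= INR l ^ l * exp x.
Proof.
  intros Hx. destruct l as [|l].
  - simpl. assert (1 <= exp x) by (destruct (Req_dec x 0) as [E|E]; [rewrite E, exp_0; lra | left; rewrite <- exp_0; apply exp_increasing; lra]). lra.
  - set (L := INR (S l)). assert (HL : 0 < L) by (unfold L; apply lt_0_INR; lia).
    assert (H1 : x / L <= exp (x / L)) by (left; apply x_lt_exp; apply Rmult_le_pos; [lra| left; apply Rinv_0_lt_compat; lra]).
    assert (H2 : (x / L) ^ S l <= exp (x / L) ^ S l) by (apply pow_incr; split; [apply Rmult_le_pos; [lra| left; apply Rinv_0_lt_compat; lra]|auto]).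
    rewrite exp_pow_INR in H2. fold L in H2. replace (L * (x / L)) with x in H2 by (field; lra).
    replace (x ^ S l) with (L ^ S l * (x / L) ^ S l).
    2: { rewrite <- Rpow_mult_distr. f_equal. field. lra. }
    apply Rmult_le_compat_l. apply pow_le; lra. auto.
Qed.

Lemma rLam_bound l : exists D, 0 <= D /\ forall z, 0 < Cmod z < 1 -> Cmod z * Lam z ^ l <= D.
Proof.
  exists (INR l ^ l * exp PI). split. apply Rmult_le_pos. apply pow_le, pos_INR. left; apply exp_pos.
  intros z Hz. set (r := Cmod z) in *. unfold Lam. fold r.
  pose proof (ln1r_pos z Hz) as Ht. fold r in Ht. set (t := ln (1 / r)) in *.
  assert (Er : r = exp (- t)).
  { unfold t. unfold Rdiv. rewrite Rmult_1_l, ln_Rinv by lra. rewrite Ropp_involutive, exp_ln; lra. }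
  pose proof (pow_le_exp (t + PI) l ltac:(pose proof PI_RGT_0; lra)) as H.
  rewrite Er. 
  replace (INR l ^ l * exp PI) with (exp (- t) * (INR l ^ l * exp (t + PI))).
  2: { rewrite exp_plus. replace (exp (- t) * (INR l ^ l * (exp t * exp PI))) with ((exp (-t) * exp t) * (INR l ^ l * exp PI)) by ring.
       rewrite <- exp_plus. replace (- t + t) with 0 by ring. rewrite exp_0. ring. }
  apply Rmult_le_compat_l. left; apply exp_pos. auto.
Qed.

Lemma Bnd_weak U f al be al' be' : Udom U ->
  (exists D, 0 <= D /\ forall j z, U z -> W al be j z <= D * W al' be' j z) ->
  Bnd U f al be -> Bnd U f al' be'.
Proof.
  intros HU [D [HD HW]] HB j. destruct (HB j) as [C [HC H]]. exists (C * D). split. nra.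
  intros z Hz. eapply Rle_trans. apply H; auto. rewrite Rmult_assoc. apply Rmult_le_compat_l; auto.
Qed.

Lemma powerRZ_mono_exp r a b : 0 < r <= 1 -> (b <= a)%Z -> powerRZ r a <= powerRZ r b.
Proof.
  intros Hr Hab. replace a with (b + Z.of_nat (Z.to_nat (a - b)))%Z by lia.
  rewrite powerRZ_add by lra. rewrite <- pow_powerRZ.
  assert (0 < powerRZ r b) by (apply powerRZ_lt; lra).
  assert (r ^ Z.to_nat (a - b) <= 1) by (rewrite <- (pow1 (Z.to_nat (a - b))); apply pow_incr; lra).
  nra.
Qed.

Lemma W_weak1 U K k0 l l0 : Udom U -> (k0 <= K)%nat -> (l <= l0)%nat ->
  exists D, 0 <= D /\ forall j z, U z -> W (0 + Z.of_nat K) (l + 0) j z <= D * W (Z.of_nat k0) l0 j z.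
Proof.
  intros HU Hk Hl. exists 1. split. lra. intros j z Hz. pose proof (HU z Hz) as Hr.
  unfold W. rewrite Rmult_1_l, Nat.add_0_r. pose proof (Lam_ge1 z Hr).
  apply Rmult_le_compat. apply powerRZ_le; lra. apply pow_le; lra.
  apply powerRZ_mono_exp. lra. lia. apply Rle_pow; auto.
Qed.

Lemma W_weak2 U K k0 l l0 : Udom U -> (S k0 <= K)%nat ->
  exists D, 0 <= D /\ forall j z, U z -> W (0 + Z.of_nat K) (l + 0) j z <= D * W (Z.of_nat k0) l0 j z.
Proof.
  intros HU Hk. destruct (rLam_bound l) as [D [HD HDb]]. exists D. split; auto.
  intros j z Hz. pose proof (HU z Hz) as Hr. unfold W. rewrite Nat.add_0_r.
  pose proof (Lam_ge1 z Hr).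
  assert (E : powerRZ (Cmod z) (0 + Z.of_nat K - Z.of_nat j) <= powerRZ (Cmod z) (Z.of_nat k0 - Z.of_nat j) * Cmod z).
  { replace (Cmod z) with (powerRZ (Cmod z) 1) at 3 by (simpl; ring).
    rewrite <- powerRZ_add by lra. apply powerRZ_mono_exp. lra. lia. }
  specialize (HDb z Hr).
  assert (0 <= powerRZ (Cmod z) (Z.of_nat k0 - Z.of_nat j)) by (apply powerRZ_le; lra).
  assert (1 <= Lam z ^ l0) by (rewrite <- (pow1 l0); apply pow_incr; lra).
  assert (0 <= Lam z ^ l) by (apply pow_le; lra).
  eapply Rle_trans. apply Rmult_le_compat_r. auto. exact E.
  replace (powerRZ (Cmod z) (Z.of_nat k0 - Z.of_nat j) * Cmod z * Lam z ^ l) with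
    (powerRZ (Cmod z) (Z.of_nat k0 - Z.of_nat j) * (Cmod z * Lam z ^ l)) by ring.
  assert (powerRZ (Cmod z) (Z.of_nat k0 - Z.of_nat j) * (Cmod z * Lam z ^ l) <= powerRZ (Cmod z) (Z.of_nat k0 - Z.of_nat j) * D)
    by (apply Rmult_le_compat_l; auto).
  assert (powerRZ (Cmod z) (Z.of_nat k0 - Z.of_nat j) * D <= D * (powerRZ (Cmod z) (Z.of_nat k0 - Z.of_nat j) * Lam z ^ l0)). { rewrite <- Rmult_assoc, (Rmult_comm _ D). replace (D * powerRZ (Cmod z) (Z.of_nat k0 - Z.of_nat j)) with (D * powerRZ (Cmod z) (Z.of_nat k0 - Z.of_nat j) * 1) at 1 by ring. apply Rmult_le_compat_l; auto. apply Rmult_le_pos; auto. } lra.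
Qed.

Lemma Bnd_rsum U m (Fi : nat -> nat -> C -> C) al be : Udom U ->
  (forall i, (i < m)%nat -> Bnd U (Fi i) al be) ->
  forall j, exists Cc, 0 <= Cc /\ forall z, U z -> rsum m (fun i => Cmod (Fi i j z)) <= Cc * W al be j z.
Proof.
  intros HU H j. induction m.
  - exists 0. split. lra. intros z Hz. simpl. pose proof (W_nonneg al be j z (HU z Hz)). lra.
  - destruct IHm as [C1 [HC1 H1]]. intros; apply H; lia.
    destruct (H m ltac:(lia) j) as [C2 [HC2 H2]].
    exists (C1 + C2). split. lra. intros z Hz. simpl. specialize (H1 z Hz). specialize (H2 z Hz). lra.
Qed.

Lemma W_mono_j al be j s z : 0 < Cmod z < 1 -> (j <= s)%nat -> W al be j z <= W al be s z.
Proof.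
  intros Hr Hjs. unfold W. apply Rmult_le_compat_r. apply pow_le. pose proof (Lam_ge1 z Hr). lra.
  apply powerRZ_mono_exp. lra. lia.
Qed.

Lemma Csn_bound U (X : nat -> C -> R) al be : Udom U ->
  (forall j, exists Cc, 0 <= Cc /\ forall z, U z -> X j z <= Cc * W al be j z) ->
  forall s, exists Cc, 0 <= Cc /\ forall z, U z -> rsum (S s) (fun j => X j z) <= Cc * W al be s z.
Proof.
  intros HU H s. induction s.
  - destruct (H 0%nat) as [C [HC H0]]. exists C. split; auto. intros z Hz. simpl. specialize (H0 z Hz). lra.
  - destruct IHs as [C1 [HC1 H1]]. destruct (H (S s)) as [C2 [HC2 H2]].
    exists (C1 + C2). split. lra. intros z Hz.
    change (rsum (S (S s)) (fun j => X j z)) with (rsum (S s) (fun j => X j z) + X (S s) z).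
    specialize (H1 z Hz). specialize (H2 z Hz).
    pose proof (W_mono_j al be s (S s) z (HU z Hz) ltac:(lia)).
    pose proof (W_nonneg al be s z (HU z Hz)).
    assert (C1 * W al be s z <= C1 * W al be (S s) z) by (apply Rmult_le_compat_l; auto).
    lra.
Qed.

Definition epsd (delta : R) := Rmin (delta / 2) (exp (- PI)).

Lemma expmPI_lt1 : exp (- PI) < 1.
Proof. rewrite <- exp_0. apply exp_increasing. pose proof PI_RGT_0. lra. Qed.

Lemma epsd_pos delta : 0 < delta -> 0 < epsd delta.
Proof. intros H. unfold epsd. apply Rmin_glb_lt. lra. apply exp_pos. Qed.

Lemma dom_facts delta z : 0 < delta -> slitdisc (epsd delta) z ->
  slit z /\ 0 < Cmod z < 1 /\ Cmod z < delta /\ Cmod z <= epsd delta /\ PI <= ln (1 / Cmod z).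
Proof.
  intros Hd [[H1 H2] H3].
  pose proof (Rmin_l (delta / 2) (exp (- PI))). pose proof (Rmin_r (delta / 2) (exp (- PI))).
  fold (epsd delta) in H, H0. pose proof expmPI_lt1.
  split. exact H3. split. lra. split. lra. split. lra.
  replace PI with (ln (1 / exp (- PI))).
  2: { rewrite exp_Ropp. unfold Rdiv. rewrite Rmult_1_l, Rinv_inv. apply ln_exp. }
  apply ln_le'. unfold Rdiv; rewrite Rmult_1_l; apply Rinv_0_lt_compat, exp_pos.
  unfold Rdiv; rewrite !Rmult_1_l. apply Rinv_le_contravar; lra.
Qed.

Lemma dom_Udom delta : 0 < delta -> Udom (slitdisc (epsd delta)).
Proof. intros Hd z Hz. apply (dom_facts delta z Hd Hz). Qed.

Definition bsel (n : nat) (mu : R) (A : nat -> Vec) (l p k : nat) : C :=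
  if Nat.leb k (Z.to_nat (up mu)) then
    (if Rle_dec (deg n (Z.of_nat k) (Z.of_nat l)) mu then RtoC 0 else A k p)
  else A k p.

Lemma deg_big n mu k l : (l <= n)%nat -> (Z.to_nat (up mu) < k)%nat -> deg n (Z.of_nat k) (Z.of_nat l) > mu.
Proof.
  intros Hl Hk. unfold deg. rewrite <- !INR_IZR_INZ.
  destruct (archimed mu) as [H1 H2].
  assert (Hn : 0 < INR (S n)) by (apply lt_0_INR; lia).
  assert (Hl' : INR l / INR (S n) < 1).
  { apply Rmult_lt_reg_r with (INR (S n)). auto. unfold Rdiv. rewrite Rmult_assoc, Rinv_l by lra.
    rewrite Rmult_1_l, Rmult_1_r. apply lt_INR. lia. }
  assert (IZR (up mu) + 1 <= INR k).
  { destruct (Z_lt_le_dec (up mu) 0) as [Hu|Hu].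
    - assert (IZR (up mu) <= -1) by (apply IZR_le; lia). assert (1 <= INR k) by (apply (le_INR 1); lia). lra.
    - rewrite INR_IZR_INZ. rewrite <- plus_IZR. apply IZR_le. lia. }
  lra.
Qed.

Lemma bsel_zero n mu A k0 l0 l p k : (l0 <= n)%nat -> (l <= n)%nat ->
  (forall k' l' : Z, deg n k' l' > mu -> deg n k' l' >= deg n (Z.of_nat k0) (Z.of_nat l0)) ->
  (k < (if Nat.leb l l0 then k0 else S k0))%nat -> bsel n mu A l p k = RtoC 0.
Proof.
  intros Hl0 Hl H3 Hk.
  assert (Hcontra : ~ (deg n (Z.of_nat k) (Z.of_nat l) > mu)).
  { intros Hd. specialize (H3 _ _ Hd). unfold deg in H3. rewrite <- !INR_IZR_INZ in H3.
    assert (Hn : 0 < INR (S n)) by (apply lt_0_INR; lia).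
    destruct (Nat.leb l l0) eqn:E.
    - apply Nat.leb_le in E.
      assert (INR l0 / INR (S n) < 1).
      { apply Rmult_lt_reg_r with (INR (S n)). auto. unfold Rdiv. rewrite Rmult_assoc, Rinv_l by lra.
        rewrite Rmult_1_l, Rmult_1_r. apply lt_INR. lia. }
      assert (0 <= INR l / INR (S n)) by (apply Rmult_le_pos; [apply pos_INR| left; apply Rinv_0_lt_compat; auto]).
      assert (INR k + 1 <= INR k0) by (rewrite <- S_INR; apply le_INR; lia).
      lra.
    - apply Nat.leb_gt in E.
      assert (INR l0 / INR (S n) < INR l / INR (S n)).
      { unfold Rdiv. apply Rmult_lt_compat_r. apply Rinv_0_lt_compat; auto. apply lt_INR; auto. }
      assert (INR k <= INR k0) by (apply le_INR; lia).
      lra. }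
  unfold bsel. destruct (Nat.leb k (Z.to_nat (up mu))) eqn:E.
  - destruct (Rle_dec (deg n (Z.of_nat k) (Z.of_nat l)) mu). auto. exfalso. apply Hcontra. lra.
  - exfalso. apply Hcontra. apply deg_big; auto. apply Nat.leb_gt; auto.
Qed.

Lemma Good_A (A : nat -> Vec) (Aval : C -> Vec) delta m p : (p < m)%nat ->
  (forall (z : C) (i : nat), Cmod z < delta -> (i < m)%nat ->
     @is_series C_AbsRing C_NormedModule (fun j => Cmult (A j i) (Cpow z j)) (Aval z i)) ->
  Good delta (fun k => A k p).
Proof.
  intros Hp H. apply (Good_of_series A Aval delta p). intros z Hz. apply H; auto.
Qed.

Lemma part2 (m n : nat) (N : Mat) (A : nat -> Vec) (Aval : C -> Vec) (delta : R) :
  0 < delta ->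
  (forall (z : C) (i : nat), Cmod z < delta -> (i < m)%nat ->
     @is_series C_AbsRing C_NormedModule
       (fun j => Cmult (A j i) (Cpow z j)) (Aval z i)) ->
  (forall (mu : R) (s k0 l0 : nat),
     (l0 <= n)%nat ->
     deg n (Z.of_nat k0) (Z.of_nat l0) > mu ->
     (forall k' l' : Z, deg n k' l' > mu ->
        deg n k' l' >= deg n (Z.of_nat k0) (Z.of_nat l0)) ->
     exists (Cc eps : R), 0 < eps /\
     exists F : nat -> Complex.C -> Vec,
       (forall z i, slitdisc eps z -> (i < m)%nat ->
          F O z i = Cminus (Omega m n N Aval z i) (trunc m n N A mu z i)) /\
       derivs_on m (slitdisc eps) F /\
       (forall z, slitdisc eps z ->
          Csnorm m F s z <=
          Cc * powerRZ (Cmod z) (Z.of_nat k0 - Z.of_nat s) * (ln (1 / Cmod z)) ^ l0)).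
Proof.
  intros Hd HA mu s k0 l0 Hl0 Hk0 H3.
  set (eps := epsd delta). set (U := slitdisc eps).
  assert (HU : Udom U) by (apply dom_Udom; auto).
  set (b := bsel n mu A).
  assert (HGb : forall l p, (p < m)%nat -> Good delta (b l p)).
  { intros l p Hp. apply (Good_le delta (fun k => A k p)).
    - intros k. unfold b, bsel. destruct (Nat.leb k (Z.to_nat (up mu))); [destruct (Rle_dec _ _)|]; try lra.
      rewrite Cmod_0. apply Cmod_ge_0.
    - apply (Good_A A Aval delta m p Hp HA). }
  set (F := Fam m n N b).
  assert (HBi : forall i, Bnd U (fun j z => F j z i) (Z.of_nat k0) l0).
  { intros i. unfold F, Fam. apply Bnd_csum; auto. intros l Hl. apply Bnd_csum; auto. intros p Hp.
    apply Bnd_scal.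
    set (Kl := if Nat.leb l l0 then k0 else S k0).
    assert (HB : Bnd U (pfam (Lp l) (PSf (b l p))) (0 + Z.of_nat Kl) (l + 0)).
    { apply pfam_Bnd; auto. apply Lp_Bnd; auto.
      apply (PSf_Bnd U delta (b l p) Kl eps); auto.
      - intros k Hk. unfold b. apply (bsel_zero n mu A k0 l0 l p k); auto. lia.
      - split. apply epsd_pos; auto. unfold eps, epsd. pose proof (Rmin_l (delta/2) (exp (- PI))). lra.
      - intros z Hz. apply (dom_facts delta z Hd Hz). }
    apply (Bnd_weak U _ (0 + Z.of_nat Kl) (l + 0) (Z.of_nat k0) l0 HU); auto.
    unfold Kl. destruct (Nat.leb l l0) eqn:E.
    - apply W_weak1; auto. apply Nat.leb_le; auto.
    - apply W_weak2; auto. }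
  assert (HX : forall j, exists Cc, 0 <= Cc /\ forall z, U z -> vnorm m (F j z) <= Cc * W (Z.of_nat k0) l0 j z).
  { intros j. destruct (Bnd_rsum U m (fun i j z => F j z i) (Z.of_nat k0) l0 HU (fun i _ => HBi i) j) as [C [HC H]].
    exists C. split; auto. }
  destruct (Csn_bound U (fun j z => vnorm m (F j z)) (Z.of_nat k0) l0 HU HX s) as [Cc [HCc HCs]].
  exists (Cc * 2 ^ l0), eps. split. apply epsd_pos; auto.
  exists F. split; [|split].
  - intros z i Hz Hi.
    pose proof (dom_facts delta z Hd Hz) as [Hsl [Hr [Hzd [Hze Hln]]]].
    assert (E : Cminus (Omega m n N Aval z i) (F 0%nat z i) = trunc m n N A mu z i).
    { unfold F. rewrite (Omega_minus_Fam m n N A Aval b z i (S (Z.to_nat (up mu)))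
           (fun l k => if Rle_dec (deg n (Z.of_nat k) (Z.of_nat l)) mu then RtoC 1 else RtoC 0)).
      - unfold trunc. apply csum_ext; intros k Hk. apply csum_ext; intros l Hl.
        destruct (Rle_dec (deg n (Z.of_nat k) (Z.of_nat l)) mu); ring.
      - intros l p Hl Hp.
        apply (Aval_minus_PS delta (fun k => A k p) (b l p) (Aval z p) z (S (Z.to_nat (up mu)))
                 (fun k => if Rle_dec (deg n (Z.of_nat k) (Z.of_nat l)) mu then RtoC 1 else RtoC 0)).
        + apply HA; auto.
        + apply HGb; auto.
        + auto.
        + intros k Hk. unfold b, bsel. replace (Nat.leb k (Z.to_nat (up mu))) with false; auto.
          symmetry. apply Nat.leb_gt. lia.
        + intros k Hk. unfold b, bsel. replace (Nat.leb k (Z.to_nat (up mu))) with true.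
          2: { symmetry. apply Nat.leb_le. lia. }
          destruct (Rle_dec (deg n (Z.of_nat k) (Z.of_nat l)) mu); ring. }
    rewrite <- E. ring.
  - intros j i z Hz Hi. apply (Fam_D m n N b U delta i HGb).
    + intros w Hw. pose proof (dom_facts delta w Hd Hw). tauto.
    + auto.
  - intros z Hz. pose proof (dom_facts delta z Hd Hz) as [Hsl [Hr [Hzd [Hze Hln]]]].
    unfold Csnorm. eapply Rle_trans. apply HCs. exact Hz.
    unfold W. rewrite !Rmult_assoc. apply Rmult_le_compat_l; auto.
    rewrite (Rmult_comm (2 ^ l0)), Rmult_assoc. apply Rmult_le_compat_l. apply powerRZ_le; lra.
    rewrite <- Rpow_mult_distr. apply pow_incr. unfold Lam. pose proof PI_RGT_0. lra.
Qed.

Lemma fin_max (L : nat) (Q : nat -> R -> Prop) :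
  (forall l B B', Q l B -> B <= B' -> Q l B') ->
  (forall l, (l < L)%nat -> exists B, 0 <= B /\ Q l B) ->
  exists B, 0 <= B /\ forall l, (l < L)%nat -> Q l B.
Proof.
  intros Hmono H. induction L.
  - exists 0. split. lra. intros; lia.
  - destruct IHL as [B1 [HB1 H1]]. intros; apply H; lia.
    destruct (H L ltac:(lia)) as [B2 [HB2 H2]].
    exists (B1 + B2). split. lra. intros l Hl.
    destruct (Nat.eq_dec l L) as [->|Hne].
    + apply (Hmono L B2); auto. lra.
    + apply (Hmono l B1); auto. apply H1; lia. lra.
Qed.

Lemma fin_K (X : nat) (P : nat -> nat -> Prop) :
  (forall x, (x < X)%nat -> exists K0, forall K, (K0 <= K)%nat -> P x K) ->
  exists K0, forall x K, (x < X)%nat -> (K0 <= K)%nat -> P x K.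
Proof.
  intros H. induction X.
  - exists O. intros; lia.
  - destruct IHX as [K1 H1]. intros; apply H; lia.
    destruct (H X ltac:(lia)) as [K2 H2].
    exists (K1 + K2)%nat. intros x K Hx HK.
    destruct (Nat.eq_dec x X) as [->|Hne].
    + apply H2; lia.
    + apply H1; lia.
Qed.

Lemma Cmod_pfam_bound f g j z B1 B2 :
  (forall a, (a <= j)%nat -> Cmod (f a z) <= B1) -> (forall b, (b <= j)%nat -> Cmod (g b z) <= B2) ->
  0 <= B1 ->
  Cmod (pfam f g j z) <= INR (length (pl j)) * (B1 * B2).
Proof.
  intros H1 H2 HB1. unfold pfam. apply lsumC_bound. intros p Hp.
  pose proof (pl_sum j p Hp). rewrite Cmod_mult.
  apply Rmult_le_compat. apply Cmod_ge_0. apply Cmod_ge_0. apply H1; lia. apply H2; lia.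
Qed.

Lemma Lp_ann_bound delta n j rho : 0 < delta -> 0 < rho -> exists B, 0 <= B /\
  forall l, (l < S n)%nat -> forall a z, (a <= j)%nat -> slitdisc (epsd delta) z -> rho <= Cmod z ->
    Cmod (Lp l a z) <= B.
Proof.
  intros Hd Hrho. set (U := slitdisc (epsd delta)). assert (HU : Udom U) by (apply dom_Udom; auto).
  apply (fin_max (S n) (fun l B => forall a z, (a <= j)%nat -> U z -> rho <= Cmod z -> Cmod (Lp l a z) <= B)).
  { intros l B B' H HB a z Ha Hz Hr. specialize (H a z Ha Hz Hr). lra. }
  intros l Hl.
  destruct (Bnd_upto U (Lp l) 0 l HU (Lp_Bnd U l HU) j) as [C [HC H]].
  exists (C * (/ rho ^ j * (Rabs (ln (1 / rho)) + PI) ^ l)). split.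
  { apply Rmult_le_pos; auto. apply Rmult_le_pos. left; apply Rinv_0_lt_compat, pow_lt; auto.
    apply pow_le. pose proof (Rabs_pos (ln (1 / rho))). pose proof PI_RGT_0. lra. }
  intros a z Ha Hz Hr. eapply Rle_trans. apply H; auto.
  apply Rmult_le_compat_l; auto. unfold W.
  pose proof (HU z Hz) as Hr1.
  assert (Hrho1 : rho < 1) by lra.
  assert (E1 : powerRZ (Cmod z) (0 - Z.of_nat a) <= / rho ^ j).
  { replace (0 - Z.of_nat a)%Z with (- Z.of_nat a)%Z by lia. rewrite powerRZ_neg', <- pow_powerRZ.
    apply Rinv_le_contravar. apply pow_lt; auto.
    apply Rle_trans with (rho ^ a). apply (pow_le_N rho a j); [lra|auto]. apply pow_incr; lra. }
  assert (E2 : Lam z <= Rabs (ln (1 / rho)) + PI).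
  { unfold Lam. apply Rle_trans with (ln (1 / rho) + PI). 2: pose proof (Rle_abs (ln (1 / rho))); lra. apply Rplus_le_compat_r. apply ln_le'. unfold Rdiv; rewrite Rmult_1_l; apply Rinv_0_lt_compat; lra.
    unfold Rdiv; rewrite !Rmult_1_l. apply Rinv_le_contravar; lra. }
  pose proof (Lam_ge1 z Hr1).
  apply Rmult_le_compat. apply powerRZ_le; lra. apply pow_le; lra. auto. apply pow_incr; lra.
Qed.

Lemma rsum_mult_r n f X : rsum n (fun k => f k * X) = rsum n f * X.
Proof. induction n; simpl. ring. rewrite IHn. ring. Qed.

Lemma part1 (m n : nat) (N : Mat) (A : nat -> Vec) (Aval : C -> Vec) (delta : R) :
  0 < delta ->
  (forall (z : C) (i : nat), Cmod z < delta -> (i < m)%nat ->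
     @is_series C_AbsRing C_NormedModule
       (fun j => Cmult (A j i) (Cpow z j)) (Aval z i)) ->
  (exists eps : R, 0 < eps /\
   exists (F : nat -> Complex.C -> Vec) (G : nat -> nat -> Complex.C -> Vec),
     (forall z i, slitdisc eps z -> (i < m)%nat -> F O z i = Omega m n N Aval z i) /\
     derivs_on m (slitdisc eps) F /\
     (forall K z i, slitdisc eps z -> (i < m)%nat -> G K O z i = psum m n N A K z i) /\
     (forall K, derivs_on m (slitdisc eps) (G K)) /\
     (forall (j : nat) (rho rho' eta : R), 0 < rho -> rho' < eps -> 0 < eta ->
        exists K0 : nat, forall K z, (K0 <= K)%nat -> slitdisc eps z ->
          rho <= Cmod z <= rho' ->
          vnorm m (vsub (G K j z) (F j z)) < eta)).
Proof.
  intros Hd HA.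
  set (eps := epsd delta). set (U := slitdisc eps).
  assert (HU : Udom U) by (apply dom_Udom; auto).
  assert (Heps : 0 < eps < delta).
  { split. apply epsd_pos; auto. unfold eps, epsd. pose proof (Rmin_l (delta/2) (exp (- PI))). lra. }
  assert (HGA : forall l p, (p < m)%nat -> Good delta ((fun (l p k : nat) => A k p) l p)).
  { intros l p Hp. apply (Good_A A Aval delta m p Hp HA). }
  assert (HGM : forall K l p, (p < m)%nat -> Good delta ((fun (l p : nat) => mask K (fun k => A k p)) l p)).
  { intros K l p Hp. apply Good_mask. apply (Good_A A Aval delta m p Hp HA). }
  assert (HUd : forall z, U z -> slit z /\ Cmod z < delta).
  { intros z Hz. pose proof (dom_facts delta z Hd Hz). tauto. }
  set (F := Fam m n N (fun l p k => A k p)).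
  set (R := fun K => Fam m n N (fun l p => mask K (fun k => A k p))).
  set (G := fun K j z i => Cminus (F j z i) (R K j z i)).
  assert (HF0 : forall z i, U z -> (i < m)%nat -> F O z i = Omega m n N Aval z i).
  { intros z i Hz Hi. pose proof (HUd z Hz) as [_ Hzd].
    assert (E : Cminus (Omega m n N Aval z i) (F 0%nat z i) = csum 0 (fun k => RtoC 0)).
    { unfold F. rewrite (Omega_minus_Fam m n N A Aval _ z i 0 (fun _ _ => RtoC 0)).
      - reflexivity.
      - intros l p Hl Hp. apply (Aval_minus_PS delta (fun k => A k p) (fun k => A k p) (Aval z p) z 0 (fun _ => RtoC 0)).
        + apply HA; auto.
        + apply (HGA l p Hp).
        + auto.
        + auto.
        + intros; lia. }
    simpl in E. replace (F 0%nat z i) with (Cminus (Omega m n N Aval z i) (Cminus (Omega m n N Aval z i) (F 0%nat z i))) by ring.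
    rewrite E. ring. }
  exists eps. split. lra. exists F, G.
  split; [|split; [|split; [|split]]].
  - exact HF0.
  - intros j i z Hz Hi. apply (Fam_D m n N _ U delta i HGA HUd). auto.
  - intros K z i Hz Hi. unfold G. rewrite HF0 by auto.
    unfold R. rewrite (Omega_minus_Fam m n N A Aval _ z i K (fun _ _ => RtoC 1)).
    + unfold psum. apply csum_ext; intros k Hk. apply csum_ext; intros l Hl. ring.
    + intros l p Hl Hp. pose proof (HUd z Hz) as [_ Hzd].
      apply (Aval_minus_PS delta (fun k => A k p) (mask K (fun k => A k p)) (Aval z p) z K (fun _ => RtoC 1)).
      * apply HA; auto.
      * apply (HGM K l p Hp).
      * auto.
      * intros k Hk. unfold mask. replace (Nat.leb K k) with true; auto. symmetry; apply Nat.leb_le; auto.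
      * intros k Hk. unfold mask. replace (Nat.leb K k) with false. ring. symmetry; apply Nat.leb_gt; auto.
  - intros K j i z Hz Hi. unfold G.
    pose proof (Dfam_minus U _ _ (Fam_D m n N _ U delta i HGA HUd) (Fam_D m n N _ U delta i (HGM K) HUd)) as HD.
    apply (HD j z Hz).
  - intros j rho rho' eta Hrho Hrho' Heta.
    destruct (Lp_ann_bound delta n j rho Hd Hrho) as [B [HB HBb]].
    set (len := INR (length (pl j))).
    set (Cst := rsum m (fun i => rsum (S n) (fun l => rsum m (fun p => Cmod (Cmult (coefv l) (matpow m N l i p)))))).
    assert (HCst : 0 <= Cst).
    { unfold Cst. apply rsum_nonneg; intros. apply rsum_nonneg; intros. apply rsum_nonneg; intros. apply Cmod_ge_0. }
    assert (Hlen : 0 <= len) by apply pos_INR.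
    set (T := Cst * (len * B)). assert (HT : 0 <= T) by (unfold T; repeat apply Rmult_le_pos; auto).
    set (eta' := eta / (2 * (T + 1))). assert (Heta' : 0 < eta') by (unfold eta'; apply Rmult_lt_0_compat; [lra|apply Rinv_0_lt_compat; lra]).
    assert (HK : exists K0, forall p K, (p < m)%nat -> (K0 <= K)%nat ->
       forall b z, (b < S j)%nat -> Cmod z <= eps -> Cmod (PSf (mask K (fun k => A k p)) b z) <= eta').
    { apply (fin_K m (fun p K => forall b z, (b < S j)%nat -> Cmod z <= eps -> Cmod (PSf (mask K (fun k => A k p)) b z) <= eta')).
      intros p Hp.
      destruct (fin_K (S j) (fun b K => forall z, Cmod z <= eps -> Cmod (PSf (mask K (fun k => A k p)) b z) <= eta')) as [K0 HK0].
      { intros b Hb. destruct (PSf_tail delta (fun k => A k p) eps b (Good_A A Aval delta m p Hp HA) Heps eta' Heta') as [K0 HK0].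
        exists K0. intros K HK z Hz. apply HK0; auto. }
      exists K0. intros K HK b z Hb Hz. apply HK0; auto. }
    destruct HK as [K0 HK0]. exists K0. intros K z HK Hz Hann.
    assert (Hze : Cmod z <= eps) by (destruct Hz as [[_ Hz1] _]; lra).
    unfold vnorm, vsub.
    eapply Rle_lt_trans with (rsum m (fun i => rsum (S n) (fun l => rsum m (fun p =>
        Cmod (Cmult (coefv l) (matpow m N l i p)) * (len * (B * eta')))))).
    + apply rsum_le. intros i Hi. unfold G.
      replace (Cminus (Cminus (F j z i) (R K j z i)) (F j z i)) with (Copp (R K j z i)) by ring.
      rewrite Cmod_opp. unfold R, Fam.
      eapply Rle_trans. apply Cmod_csum. apply rsum_le. intros l Hl.
      eapply Rle_trans. apply Cmod_csum. apply rsum_le. intros p Hp.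
      rewrite Cmod_mult. apply Rmult_le_compat_l. apply Cmod_ge_0.
      apply Cmod_pfam_bound; auto.
      * intros a Ha. apply (HBb l Hl a z Ha Hz). lra.
      * intros b Hb. apply (HK0 p K Hp HK b z ltac:(lia) Hze).
    + rewrite <- (rsum_ext m (fun i => rsum (S n) (fun l => rsum m (fun p => Cmod (Cmult (coefv l) (matpow m N l i p)))) * (len * (B * eta')))).
      2: { intros i Hi. rewrite <- rsum_mult_r. apply rsum_ext. intros l Hl. rewrite <- rsum_mult_r. reflexivity. }
      rewrite rsum_mult_r. fold Cst.
      replace (Cst * (len * (B * eta'))) with (T * eta') by (unfold T; ring).
      unfold eta'. 
      assert (T * (eta / (2 * (T + 1))) = eta * (T / (2 * (T + 1)))) by (field; lra).
      rewrite H.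
      assert (T / (2 * (T + 1)) < 1). { apply Rmult_lt_reg_r with (2 * (T + 1)). lra. unfold Rdiv. rewrite Rmult_assoc, Rinv_l by lra. lra. }
      nra.
Qed.

End Dev.

Theorem lemma7p2 (m n : nat) (N : Mat) (A : nat -> Vec)
  (Aval : Complex.C -> Vec) (delta : R) :
  0 < delta ->
  (* N is nilpotent, N^(n+1) = 0 *)
  (forall i j : nat, (i < m)%nat -> (j < m)%nat -> matpow m N (S n) i j = RtoC 0) ->
  (* A(z) = A_0 + A_1 z + ... converges to Aval z for |z| < delta *)
  (forall (z : Complex.C) (i : nat), Cmod z < delta -> (i < m)%nat ->
     @is_series C_AbsRing C_NormedModule
       (fun j => Cmult (A j i) (Cpow z j)) (Aval z i)) ->
  (* (1) the series sum_{k,l} A_{k,l} f_{k,l} converges to Omega in the C^oo sense near 0 *)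
  (exists eps : R, 0 < eps /\
   exists (F : nat -> Complex.C -> Vec) (G : nat -> nat -> Complex.C -> Vec),
     (forall z i, slitdisc eps z -> (i < m)%nat -> F O z i = Omega m n N Aval z i) /\
     derivs_on m (slitdisc eps) F /\
     (forall K z i, slitdisc eps z -> (i < m)%nat -> G K O z i = psum m n N A K z i) /\
     (forall K, derivs_on m (slitdisc eps) (G K)) /\
     (forall (j : nat) (rho rho' eta : R), 0 < rho -> rho' < eps -> 0 < eta ->
        exists K0 : nat, forall K z, (K0 <= K)%nat -> slitdisc eps z ->
          rho <= Cmod z <= rho' ->
          vnorm m (vsub (G K j z) (F j z)) < eta)) /\
  (* (2) the remainder estimate *)
  (forall (mu : R) (s k0 l0 : nat),
     (l0 <= n)%nat ->
     deg n (Z.of_nat k0) (Z.of_nat l0) > mu ->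
     (forall k' l' : Z, deg n k' l' > mu ->
        deg n k' l' >= deg n (Z.of_nat k0) (Z.of_nat l0)) ->
     exists (Cc eps : R), 0 < eps /\
     exists F : nat -> Complex.C -> Vec,
       (forall z i, slitdisc eps z -> (i < m)%nat ->
          F O z i = Cminus (Omega m n N Aval z i) (trunc m n N A mu z i)) /\
       derivs_on m (slitdisc eps) F /\
       (forall z, slitdisc eps z ->
          Csnorm m F s z <=
          Cc * powerRZ (Cmod z) (Z.of_nat k0 - Z.of_nat s) * (ln (1 / Cmod z)) ^ l0)).
Proof.
  intros Hd HN HA. split.
  - exact (part1 m n N A Aval delta Hd HA).
  - exact (part2 m n N A Aval delta Hd HA).
Qed.
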